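(* Let $\varphi$ be a Schwarz-type function, let $F\in\mathcal{P}$, and let $\omega$ be the Schwarz-type function with $F=\ell\circ\omega$. Then the following are equivalent: (a) $T_{F,\varphi}(f)\in\mathcal{P}$ for every $f\in\mathcal{P}$; (b) $T_{F,\varphi}(\ell_\lambda)\in\mathcal{P}$ for every $\lambda$ with $|\lambda|=1$; (c) for all $z\in\mathbb{D}$, $$4|\varphi(z)|\,|\mathrm{Im}\,\omega(z)|<(1-|\omega(z)|^2)(1-|\varphi(z)|^2),$$ equivalently, for all $z\in\mathbb{D}$, $$2|\varphi(z)|\left|\frac{\mathrm{Im}\,F(z)}{\mathrm{Re}\,F(z)}\right|<1-|\varphi(z)|^2;$$ (d) for all $z\in\mathbb{D}$, $$|\arg F(z)|<\frac{\pi}{2}-\arcsin\frac{2|\varphi(z)|}{1+|\varphi(z)|^2}.$$ Moreover, $\frac{\pi}{2}-\arcsin\frac{2|\varphi(z)|}{1+|\varphi(z)|^2}=\frac{\pi}{2}-\arctan\frac{2|\varphi(z)|}{1-|\varphi(z)|^2}=\arctan\frac{1-|\varphi(z)|^2}{2|\varphi(z)|}$, where for $\varphi(z)=0$ the last expression is understood as $\arctan(+\infty)=\pi/2$.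
   Context: $\mathbb{D}$ is the open unit disk. $\mathcal{P}$ is the set of analytic $f$ on $\mathbb{D}$ with $\mathrm{Re}\,f>0$ and $f(0)=1$. A Schwarz-type function is an analytic $\varphi:\mathbb{D}\to\mathbb{D}$ with $\varphi(0)=0$. $\ell(z)=\frac{1+z}{1-z}$ and, for $|\lambda|=1$, $\ell_\lambda(z)=\frac{1+\lambda z}{1-\lambda z}$. $T_{F,\varphi}(f)=F\cdot(f\circ\varphi)$. $\arg$ denotes the principal branch of the argument with values in $(-\pi,\pi]$. *)

(* Defs.v *)
From Stdlib Require Import Reals.
From Coquelicot Require Import Coquelicot.
Open Scope R_scope.

Definition inD (z : C) : Prop := Cmod z < 1.

Definition analytic_on_D (f : C -> C) : Prop :=
  forall z : C, inD z -> @ex_derive C_AbsRing C_NormedModule f z.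

Definition classP (f : C -> C) : Prop :=
  analytic_on_D f /\ (forall z, inD z -> 0 < Re (f z)) /\ f 0%C = 1%C.

Definition schwarz_type (phi : C -> C) : Prop :=
  analytic_on_D phi /\ (forall z, inD z -> inD (phi z)) /\ phi 0%C = 0%C.

Definition ell (z : C) : C := ((1 + z) / (1 - z))%C.
Definition ell_lam (lam : C) (z : C) : C := ((1 + lam * z) / (1 - lam * z))%C.

Definition T_op (F phi f : C -> C) : C -> C := fun z => (F z * f (phi z))%C.

(* Principal argument with values in (-PI, PI] (arg 0 := 0). *)
Definition Carg (z : C) : R :=
  let x := Re z in let y := Im z in
  if Rlt_dec 0 x then atan (y / x)
  else if Rlt_dec x 0 then
    (if Rle_dec 0 y then atan (y / x) + PI else atan (y / x) - PI)
  else if Rlt_dec 0 y then PI / 2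
  else if Rlt_dec y 0 then - (PI / 2)
  else 0.

(* arctan((1 - t^2)/(2 t)) for t > 0, and arctan(+oo) = PI/2 for t = 0. *)
Definition atan_ratio (t : R) : R :=
  if Req_EM_T t 0 then PI / 2 else atan ((1 - t ^ 2) / (2 * t)).

(* Main.v *)
Require Import Defs.
From Stdlib Require Import Reals Lra Lia.
From Coquelicot Require Import Coquelicot.
Open Scope R_scope.

Lemma Cmod_le_sum (z : C) : Cmod z <= Rabs (fst z) + Rabs (snd z).
Proof.
  unfold Cmod. rewrite <- (sqrt_Rsqr (Rabs (fst z) + Rabs (snd z))).
  2:{ pose proof (Rabs_pos (fst z)); pose proof (Rabs_pos (snd z)); lra. }
  apply sqrt_le_1_alt. unfold Rsqr.
  pose proof (Rabs_pos (fst z)); pose proof (Rabs_pos (snd z)).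
  replace (fst z ^ 2) with (Rabs (fst z) * Rabs (fst z)).
  2:{ rewrite <- Rabs_mult. simpl. rewrite Rmult_1_r. apply Rabs_pos_eq. nra. }
  replace (snd z ^ 2) with (Rabs (snd z) * Rabs (snd z)).
  2:{ rewrite <- Rabs_mult. simpl. rewrite Rmult_1_r. apply Rabs_pos_eq. nra. }
  nra.
Qed.

Lemma fst_le_Cmod (z : C) : Rabs (fst z) <= Cmod z.
Proof. apply re_le_Cmod. Qed.

Lemma snd_le_Cmod (z : C) : Rabs (snd z) <= Cmod z.
Proof.
  pose proof (Rmax_Cmod z). pose proof (Rmax_r (Rabs (fst z)) (Rabs (snd z))). lra.
Qed.

Definition ccR (g : R -> C) (x : R) := forall eps, 0 < eps -> exists d, 0 < d /\
  forall y, Rabs (y - x) < d -> Cmod (g y - g x) < eps.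

Definition ccC (K : C -> C) (w : C) := forall eps, 0 < eps -> exists d, 0 < d /\
  forall v, Cmod (v - w) < d -> Cmod (K v - K w) < eps.

Lemma cont_eps (f : R -> R) x :
  (forall eps, 0 < eps -> exists d, 0 < d /\ forall y, Rabs (y - x) < d -> Rabs (f y - f x) < eps)
  -> continuous f x.
Proof.
  intros H. apply continuity_pt_filterlim. intros eps Heps.
  destruct (H eps Heps) as [d [Hd H']]. exists d. split; auto.
  intros y [_ Hy]. apply H'. exact Hy.
Qed.

Lemma eps_cont (f : R -> R) x : continuous f x ->
  (forall eps, 0 < eps -> exists d, 0 < d /\ forall y, Rabs (y - x) < d -> Rabs (f y - f x) < eps).
Proof.
  intros H. apply continuity_pt_filterlim in H. intros eps Heps.
  destruct (H eps Heps) as [d [Hd H']]. exists d. split; auto.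
  intros y Hy. destruct (Req_dec y x) as [->|Hne].
  - unfold Rminus. rewrite Rplus_opp_r, Rabs_R0. lra.
  - apply H'. split. split. exact I. auto. exact Hy.
Qed.

Lemma ccR_fst (g : R -> C) (x : R) : ccR g x -> continuous (fun y => fst (g y)) x.
Proof.
  intros H. apply cont_eps. intros eps Heps. destruct (H eps Heps) as [d [Hd H']].
  exists d; split; auto. intros y Hy. specialize (H' y Hy).
  pose proof (fst_le_Cmod (g y - g x)%C) as HH. simpl in HH. unfold Rminus. lra.
Qed.

Lemma ccR_snd (g : R -> C) (x : R) : ccR g x -> continuous (fun y => snd (g y)) x.
Proof.
  intros H. apply cont_eps. intros eps Heps. destruct (H eps Heps) as [d [Hd H']].
  exists d; split; auto. intros y Hy. specialize (H' y Hy).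
  pose proof (snd_le_Cmod (g y - g x)%C) as HH. simpl in HH. unfold Rminus. lra.
Qed.

Lemma ccR_of (g : R -> C) (x : R) : continuous (fun y => fst (g y)) x -> continuous (fun y => snd (g y)) x -> ccR g x.
Proof.
  intros H1 H2 eps Heps.
  destruct (eps_cont _ _ H1 (eps/2)) as [d1 [Hd1 H1']]; [lra|].
  destruct (eps_cont _ _ H2 (eps/2)) as [d2 [Hd2 H2']]; [lra|].
  exists (Rmin d1 d2). split. apply Rmin_pos; auto.
  intros y Hy. pose proof (Rmin_l d1 d2). pose proof (Rmin_r d1 d2).
  specialize (H1' y ltac:(lra)). specialize (H2' y ltac:(lra)).
  pose proof (Cmod_le_sum (g y - g x)%C) as HH. simpl in HH. unfold Rminus in *. lra.
Qed.

Lemma contR_mult (f g : R -> R) x : continuous f x -> continuous g x -> continuous (fun y => f y * g y) x.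
Proof.
  intros Hf Hg. apply continuity_pt_filterlim. apply continuity_pt_filterlim in Hf, Hg.
  exact (continuity_pt_mult f g x Hf Hg).
Qed.
Lemma contR_plus (f g : R -> R) x : continuous f x -> continuous g x -> continuous (fun y => f y + g y) x.
Proof.
  intros Hf Hg. apply continuity_pt_filterlim. apply continuity_pt_filterlim in Hf, Hg.
  exact (continuity_pt_plus f g x Hf Hg).
Qed.
Lemma contR_minus (f g : R -> R) x : continuous f x -> continuous g x -> continuous (fun y => f y - g y) x.
Proof.
  intros Hf Hg. apply continuity_pt_filterlim. apply continuity_pt_filterlim in Hf, Hg.
  exact (continuity_pt_minus f g x Hf Hg).
Qed.
Lemma contR_opp (f : R -> R) x : continuous f x -> continuous (fun y => - f y) x.
Proof.
  intros Hf. apply continuity_pt_filterlim. apply continuity_pt_filterlim in Hf.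
  exact (continuity_pt_opp f x Hf).
Qed.

Lemma ccR_comp (K : C -> C) g x : ccC K (g x) -> ccR g x -> ccR (fun y => K (g y)) x.
Proof.
  intros HK Hg eps Heps. destruct (HK eps Heps) as [d1 [Hd1 H1]].
  destruct (Hg d1 Hd1) as [d2 [Hd2 H2]]. exists d2; split; auto.
Qed.

Lemma ccR_mult f g x : ccR f x -> ccR g x -> ccR (fun y => f y * g y)%C x.
Proof.
  intros Hf Hg. apply ccR_of.
  - simpl. apply contR_minus; apply contR_mult;
    (apply ccR_fst || apply ccR_snd); auto.
  - simpl. apply contR_plus; apply contR_mult;
    (apply ccR_fst || apply ccR_snd); auto.
Qed.

Lemma ccR_plus f g x : ccR f x -> ccR g x -> ccR (fun y => f y + g y)%C x.
Proof.
  intros Hf Hg. apply ccR_of.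
  - simpl. apply contR_plus; apply ccR_fst; auto.
  - simpl. apply contR_plus; apply ccR_snd; auto.
Qed.

Lemma ccR_opp f x : ccR f x -> ccR (fun y => - f y)%C x.
Proof.
  intros Hf. apply ccR_of.
  - simpl. apply contR_opp; apply ccR_fst; auto.
  - simpl. apply contR_opp; apply ccR_snd; auto.
Qed.

Lemma ccR_const c x : ccR (fun _ => c) x.
Proof. intros eps Heps. exists 1. split. lra. intros. unfold Cminus. rewrite Cplus_opp_r, Cmod_0. lra. Qed.

Lemma derR_plus (f g : R -> R) x a b : is_derive f x a -> is_derive g x b -> is_derive (fun y => f y + g y) x (a + b).
Proof. intros Hf Hg. apply is_derive_Reals. apply is_derive_Reals in Hf, Hg. exact (derivable_pt_lim_plus f g x a b Hf Hg). Qed.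
Lemma derR_minus (f g : R -> R) x a b : is_derive f x a -> is_derive g x b -> is_derive (fun y => f y - g y) x (a - b).
Proof. intros Hf Hg. apply is_derive_Reals. apply is_derive_Reals in Hf, Hg. exact (derivable_pt_lim_minus f g x a b Hf Hg). Qed.
Lemma derR_mult (f g : R -> R) x a b : is_derive f x a -> is_derive g x b -> is_derive (fun y => f y * g y) x (a * g x + f x * b).
Proof. intros Hf Hg. apply is_derive_Reals. apply is_derive_Reals in Hf, Hg. exact (derivable_pt_lim_mult f g x a b Hf Hg). Qed.
Lemma derR_eq (f : R -> R) x l l' : l = l' -> is_derive f x l -> is_derive f x l'.
Proof. intros ->; auto. Qed.
Lemma derR_const (c : R) x : is_derive (fun _ => c) x 0.
Proof. apply is_derive_Reals. apply derivable_pt_lim_const. Qed.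

Definition cder (g : R -> C) (x : R) (l : C) :=
  is_derive (fun y => fst (g y)) x (fst l) /\ is_derive (fun y => snd (g y)) x (snd l).

Lemma cder_ccR g x l : cder g x l -> ccR g x.
Proof.
  intros [H1 H2]. apply ccR_of; apply (@ex_derive_continuous R_AbsRing R_NormedModule); eexists; eauto.
Qed.

Lemma cder_plus f g x lf lg : cder f x lf -> cder g x lg -> cder (fun y => f y + g y)%C x (lf + lg)%C.
Proof.
  intros [H1 H2] [H3 H4]. split; simpl; apply derR_plus; auto.
Qed.

Lemma cder_mult f g x lf lg : cder f x lf -> cder g x lg ->
  cder (fun y => f y * g y)%C x (lf * g x + f x * lg)%C.
Proof.
  intros [H1 H2] [H3 H4]. split; simpl.
  - eapply is_derive_ext. { intros t. reflexivity. }
    eapply derR_eq. 2:{ apply derR_minus; apply derR_mult; eauto. }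
    simpl. ring.
  - eapply derR_eq. 2:{ apply derR_plus; apply derR_mult; eauto. }
    simpl. ring.
Qed.

Lemma cder_const c x : cder (fun _ => c) x 0%C.
Proof. split; simpl; apply derR_const. Qed.

Lemma cder_ext f g x l : (forall y, f y = g y) -> cder f x l -> cder g x l.
Proof.
  intros E [H1 H2]. split; eapply is_derive_ext; try eassumption; intros; simpl; rewrite E; auto.
Qed.

Lemma cder_eq f x l l' : l = l' -> cder f x l -> cder f x l'.
Proof. intros ->; auto. Qed.

Definition CInt (f : R -> C) (a b : R) : C :=
  (RInt (fun t => fst (f t)) a b, RInt (fun t => snd (f t)) a b).

Definition cint_ok (f : R -> C) (a b : R) := forall t, Rmin a b <= t <= Rmax a b -> ccR f t.

Lemma cint_ok_fst f a b : cint_ok f a b -> ex_RInt (fun t => fst (f t)) a b.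
Proof. intros H. apply (@ex_RInt_continuous R_CompleteNormedModule). intros; apply ccR_fst; auto. Qed.
Lemma cint_ok_snd f a b : cint_ok f a b -> ex_RInt (fun t => snd (f t)) a b.
Proof. intros H. apply (@ex_RInt_continuous R_CompleteNormedModule). intros; apply ccR_snd; auto. Qed.

Lemma RIntR_plus (f g : R -> R) a b : ex_RInt f a b -> ex_RInt g a b ->
  RInt (fun x => f x + g x) a b = RInt f a b + RInt g a b.
Proof. intros H1 H2. exact (RInt_plus f g a b H1 H2). Qed.
Lemma RIntR_minus (f g : R -> R) a b : ex_RInt f a b -> ex_RInt g a b ->
  RInt (fun x => f x - g x) a b = RInt f a b - RInt g a b.
Proof. intros H1 H2. exact (RInt_minus f g a b H1 H2). Qed.
Lemma RIntR_scal (f : R -> R) a b l : ex_RInt f a b ->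
  RInt (fun x => l * f x) a b = l * RInt f a b.
Proof. intros H1. exact (RInt_scal f a b l H1). Qed.
Lemma ex_RIntR_scal (f : R -> R) a b l : ex_RInt f a b -> ex_RInt (fun x => l * f x) a b.
Proof. intros H1. exact (ex_RInt_scal f a b l H1). Qed.

Lemma CInt_plus f g a b : cint_ok f a b -> cint_ok g a b ->
  CInt (fun t => f t + g t)%C a b = (CInt f a b + CInt g a b)%C.
Proof.
  intros Hf Hg. unfold CInt. apply injective_projections; cbn [fst snd Cplus].
  - apply RIntR_plus. apply cint_ok_fst; auto. apply cint_ok_fst; auto.
  - apply RIntR_plus. apply cint_ok_snd; auto. apply cint_ok_snd; auto.
Qed.

Lemma CInt_minus f g a b : cint_ok f a b -> cint_ok g a b ->
  CInt (fun t => f t - g t)%C a b = (CInt f a b - CInt g a b)%C.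
Proof.
  intros Hf Hg. unfold CInt. apply injective_projections; cbn [fst snd Cplus Cminus Cmult Copp].
  - rewrite (RInt_ext _ (fun t => fst (f t) - fst (g t))). 2:{ intros; simpl; ring. }
    rewrite RIntR_minus; [ring| |]; apply cint_ok_fst; auto.
  - rewrite (RInt_ext _ (fun t => snd (f t) - snd (g t))). 2:{ intros; simpl; ring. }
    rewrite RIntR_minus; [ring| |]; apply cint_ok_snd; auto.
Qed.

Lemma CInt_scal (c : C) f a b : cint_ok f a b ->
  CInt (fun t => c * f t)%C a b = (c * CInt f a b)%C.
Proof.
  intros Hf. pose proof (cint_ok_fst _ _ _ Hf). pose proof (cint_ok_snd _ _ _ Hf).
  unfold CInt. apply injective_projections; cbn [fst snd Cplus Cminus Cmult Copp].
  - rewrite RIntR_minus by (apply ex_RIntR_scal; auto).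
    rewrite !RIntR_scal by auto. ring.
  - rewrite RIntR_plus by (apply ex_RIntR_scal; auto).
    rewrite !RIntR_scal by auto. ring.
Qed.

Lemma CInt_Chasles f a b c : cint_ok f a b -> cint_ok f b c ->
  (CInt f a b + CInt f b c)%C = CInt f a c.
Proof.
  intros H1 H2. unfold CInt. apply injective_projections; cbn [fst snd Cplus Cminus Cmult Copp].
  - exact (RInt_Chasles (V:=R_CompleteNormedModule) _ a b c (cint_ok_fst _ _ _ H1) (cint_ok_fst _ _ _ H2)).
  - exact (RInt_Chasles (V:=R_CompleteNormedModule) _ a b c (cint_ok_snd _ _ _ H1) (cint_ok_snd _ _ _ H2)).
Qed.

Lemma CInt_ext f g a b : (forall t, Rmin a b <= t <= Rmax a b -> f t = g t) -> CInt f a b = CInt g a b.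
Proof.
  intros E. unfold CInt. f_equal; apply RInt_ext; intros x Hx; rewrite E; auto;
  split; apply Rlt_le; apply Hx.
Qed.

Lemma CInt_bound f a b M : a <= b -> cint_ok f a b ->
  (forall t, a <= t <= b -> Cmod (f t) <= M) -> Cmod (CInt f a b) <= 2 * M * (b - a).
Proof.
  intros Hab Hf HM. eapply Rle_trans. apply Cmod_le_sum. unfold CInt; cbn [fst snd].
  assert (Rabs (RInt (fun t => fst (f t)) a b) <= (b - a) * M).
  { apply abs_RInt_le_const; auto. apply cint_ok_fst; auto.
    intros t Ht. eapply Rle_trans. apply fst_le_Cmod. auto. }
  assert (Rabs (RInt (fun t => snd (f t)) a b) <= (b - a) * M).
  { apply abs_RInt_le_const; auto. apply cint_ok_snd; auto.
    intros t Ht. eapply Rle_trans. apply snd_le_Cmod. auto. }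
  lra.
Qed.

Lemma CInt_const (c : C) a b : CInt (fun _ => c) a b = ((b - a) * c)%C.
Proof.
  unfold CInt. rewrite !(RInt_const (V:=R_CompleteNormedModule)).
  apply injective_projections; cbn [fst snd Cmult RtoC]; unfold scal; simpl; unfold mult; simpl; ring.
Qed.

Lemma CInt_FTC (g dg : R -> C) a b :
  (forall t, Rmin a b <= t <= Rmax a b -> cder g t (dg t)) ->
  (forall t, Rmin a b <= t <= Rmax a b -> ccR dg t) ->
  CInt dg a b = (g b - g a)%C.
Proof.
  intros Hd Hc. unfold CInt. apply injective_projections; cbn [fst snd Cplus Cminus Cmult Copp].
  - apply is_RInt_unique. apply (@is_RInt_derive R_CompleteNormedModule (fun t => fst (g t))).
    + intros; apply Hd; auto.
    + intros; apply ccR_fst; auto.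
  - apply is_RInt_unique. apply (@is_RInt_derive R_CompleteNormedModule (fun t => snd (g t))).
    + intros; apply Hd; auto.
    + intros; apply ccR_snd; auto.
Qed.

Definition hol (K : C -> C) (w : C) (b : C) := forall eps, 0 < eps -> exists d, 0 < d /\
  forall v, Cmod (v - w) < d -> Cmod (K v - K w - (v - w) * b) <= eps * Cmod (v - w).

Lemma is_derive_hol K w b : @is_derive C_AbsRing C_NormedModule K w b -> hol K w b.
Proof.
  intros [_ H] eps Heps.
  specialize (H w (fun P HP => HP) (mkposreal eps Heps)).
  apply (@locally_le_locally_norm C_AbsRing (AbsRing_NormedModule C_AbsRing)) in H. destruct H as [d Hd].
  exists d. split. apply cond_pos. intros v Hv. apply (Hd v). exact Hv.
Qed.

Lemma hol_is_derive K w b : hol K w b -> @is_derive C_AbsRing C_NormedModule K w b.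
Proof.
  intros H. split. apply is_linear_scal_l.
  intros x Hx. apply (@is_filter_lim_locally_unique C_AbsRing (AbsRing_NormedModule C_AbsRing)) in Hx. subst x.
  intros eps. apply (@locally_norm_le_locally C_AbsRing (AbsRing_NormedModule C_AbsRing)).
  destruct (H eps (cond_pos eps)) as [d [Hd H']].
  exists (mkposreal d Hd). intros v Hv. apply H'. exact Hv.
Qed.

Lemma hol_ccC K w b : hol K w b -> ccC K w.
Proof.
  intros H eps Heps.
  destruct (H 1 ltac:(lra)) as [d [Hd H']].
  exists (Rmin d (eps / (1 + Cmod b + 1))). split.
  { apply Rmin_pos; auto. apply Rdiv_lt_0_compat; auto. pose proof (Cmod_ge_0 b); lra. }
  intros v Hv. pose proof (Rmin_l d (eps / (1 + Cmod b + 1))). pose proof (Rmin_r d (eps / (1 + Cmod b + 1))).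
  specialize (H' v ltac:(lra)).
  replace (K v - K w)%C with ((K v - K w - (v - w) * b) + (v - w) * b)%C by ring.
  eapply Rle_lt_trans. apply Cmod_triangle. rewrite Cmod_mult.
  pose proof (Cmod_ge_0 b). pose proof (Cmod_ge_0 (v - w)).
  assert (Cmod (v - w) * (1 + Cmod b + 1) < eps).
  { apply Rlt_le_trans with (eps / (1 + Cmod b + 1) * (1 + Cmod b + 1)).
    apply Rmult_lt_compat_r; lra. right. field. lra. }
  nra.
Qed.

Lemma ex_derive_ccC K w : @ex_derive C_AbsRing C_NormedModule K w -> ccC K w.
Proof. intros [b Hb]. eapply hol_ccC. apply is_derive_hol. eauto. Qed.

Lemma hol_inv (w : C) : w <> 0%C -> hol (fun v => / v)%C w (- / (w * w))%C.
Proof.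
  intros Hw eps Heps. pose proof (proj1 (Cmod_gt_0 w) Hw) as Hm.
  set (m := Cmod w) in *.
  exists (Rmin (m / 2) (eps * (m * m * m) / 2)). split.
  { apply Rmin_pos. lra. apply Rdiv_lt_0_compat; [|lra]. apply Rmult_lt_0_compat; [lra|]. apply Rmult_lt_0_compat; [apply Rmult_lt_0_compat|]; lra. }
  intros v Hv. pose proof (Rmin_l (m / 2) (eps * (m * m * m) / 2)). pose proof (Rmin_r (m / 2) (eps * (m * m * m) / 2)).
  assert (Hvm : m / 2 <= Cmod v).
  { assert (Cmod w <= Cmod v + Cmod (v - w)).
    { replace w with (v + - (v - w))%C at 1 by ring. eapply Rle_trans. apply Cmod_triangle.
      rewrite Cmod_opp. lra. }
    fold m in H1. lra. }
  assert (Hv0 : v <> 0%C). { intros ->. rewrite Cmod_0 in Hvm. lra. }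
  replace (/ v - / w - (v - w) * - / (w * w))%C with ((v - w) * (v - w) / (v * w * w))%C
    by (field; auto).
  rewrite Cmod_div. 2:{ apply Cmult_neq_0; [apply Cmult_neq_0|]; auto. }
  rewrite !Cmod_mult. fold m.
  pose proof (Cmod_ge_0 (v - w)).
  assert (Hpos : 0 < Cmod v * m * m) by (apply Rmult_lt_0_compat; [apply Rmult_lt_0_compat|]; lra).
  apply Rle_trans with (Cmod (v - w) * Cmod (v - w) / (m / 2 * m * m)).
  { unfold Rdiv. apply Rmult_le_compat_l. nra.
    apply Rinv_le_contravar. apply Rmult_lt_0_compat; [apply Rmult_lt_0_compat|]; lra.
    apply Rmult_le_compat_r; [lra|]. apply Rmult_le_compat_r; lra. }
  apply Rle_trans with (Cmod (v - w) * (eps * (m * m * m) / 2) / (m / 2 * m * m)).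
  { unfold Rdiv. apply Rmult_le_compat_r. 
    { left. apply Rinv_0_lt_compat. apply Rmult_lt_0_compat; [apply Rmult_lt_0_compat|]; lra. }
    apply Rmult_le_compat_l; lra. }
  right. field. lra.
Qed.

Lemma is_derive_Cinv (w : C) : w <> 0%C ->
  @is_derive C_AbsRing C_NormedModule (fun v => / v)%C w (- / (w * w))%C.
Proof. intros; apply hol_is_derive, hol_inv; auto. Qed.

Lemma INR_le_pow2 n : INR n <= 2 ^ n.
Proof.
  induction n. simpl. lra. rewrite S_INR. simpl.
  assert (1 <= 2 ^ n) by (apply pow_R1_Rle; lra). lra.
Qed.

Lemma small_pow2 x d : 0 < x -> 0 < d -> exists n, x / 2 ^ n < d.
Proof.
  intros Hx Hd. destruct (archimed_cor1 (d / x)) as [N [HN HN0]].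
  apply Rdiv_lt_0_compat; auto.
  exists N. apply lt_0_INR in HN0. pose proof (INR_le_pow2 N).
  assert (0 < 2 ^ N) by (apply pow_lt; lra).
  apply Rle_lt_trans with (x / INR N).
  { unfold Rdiv. apply Rmult_le_compat_l. lra. apply Rinv_le_contravar; auto. }
  apply Rmult_lt_reg_r with (/ x). apply Rinv_0_lt_compat; auto.
  replace (x / INR N * / x) with (/ INR N) by (field; lra).
  replace (d * / x) with (d / x) by (field; lra). auto.
Qed.

Definition inRect (S0 T0 HS HT a c hs ht : R) :=
  S0 <= a /\ a + hs <= S0 + HS /\ T0 <= c /\ c + ht <= T0 + HT.

Definition choose4 (Bq : R -> R -> R -> R -> C) (a c hs ht : R) : R * R :=
  let h := hs / 2 in let k := ht / 2 in
  let v := Cmod (Bq a c hs ht) / 4 in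
  if Rle_dec v (Cmod (Bq a c h k)) then (a, c)
  else if Rle_dec v (Cmod (Bq (a + h) c h k)) then (a + h, c)
  else if Rle_dec v (Cmod (Bq a (c + k) h k)) then (a, c + k)
  else (a + h, c + k).

Lemma choose4_spec (Bq : R -> R -> R -> R -> C) (a c hs ht : R) :
  Bq a c hs ht = Cplus (Cplus (Cplus (Bq a c (hs/2) (ht/2)) (Bq (a + hs/2) c (hs/2) (ht/2)))
     (Bq a (c + ht/2) (hs/2) (ht/2))) (Bq (a + hs/2) (c + ht/2) (hs/2) (ht/2)) ->
  let p := choose4 Bq a c hs ht in
  (fst p = a \/ fst p = a + hs / 2) /\ (snd p = c \/ snd p = c + ht / 2) /\
  Cmod (Bq a c hs ht) / 4 <= Cmod (Bq (fst p) (snd p) (hs/2) (ht/2)).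
Proof.
  intros E p. unfold p, choose4.
  destruct (Rle_dec _ _) as [H1|H1]. { simpl. auto. }
  destruct (Rle_dec _ _) as [H2|H2]. { simpl. auto. }
  destruct (Rle_dec _ _) as [H3|H3]. { simpl. auto. }
  simpl. split; [auto|]. split; [auto|].
  rewrite E in *. apply Rnot_le_lt in H1, H2, H3.
  set (q1 := Bq a c (hs / 2) (ht / 2)) in *.
  set (q2 := Bq (a + hs / 2) c (hs / 2) (ht / 2)) in *.
  set (q3 := Bq a (c + ht / 2) (hs / 2) (ht / 2)) in *.
  set (q4 := Bq (a + hs / 2) (c + ht / 2) (hs / 2) (ht / 2)) in *.
  pose proof (Cmod_triangle (q1 + q2 + q3) q4).
  pose proof (Cmod_triangle (q1 + q2) q3).
  pose proof (Cmod_triangle q1 q2). lra.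
Qed.

Fixpoint corner (Bq : R -> R -> R -> R -> C) (S0 T0 HS HT : R) (n : nat) : R * R :=
  match n with
  | O => (S0, T0)
  | S m => let p := corner Bq S0 T0 HS HT m in
           choose4 Bq (fst p) (snd p) (HS / 2 ^ m) (HT / 2 ^ m)
  end.

Lemma half_pow (x : R) n : x / 2 ^ n / 2 = x / 2 ^ S n.
Proof. simpl. assert (0 < 2 ^ n) by (apply pow_lt; lra). field. lra. Qed.

Lemma bisect (Bq : R -> R -> R -> R -> C) (S0 T0 HS HT : R) :
  0 < HS -> 0 < HT ->
  (forall a c hs ht, 0 < hs -> 0 < ht -> inRect S0 T0 HS HT a c hs ht ->
     Bq a c hs ht = Cplus (Cplus (Cplus (Bq a c (hs/2) (ht/2)) (Bq (a + hs/2) c (hs/2) (ht/2)))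
     (Bq a (c + ht/2) (hs/2) (ht/2))) (Bq (a + hs/2) (c + ht/2) (hs/2) (ht/2))) ->
  (forall s t, S0 <= s <= S0 + HS -> T0 <= t <= T0 + HT -> forall eps, 0 < eps ->
     exists d, 0 < d /\ forall a c hs ht, 0 < hs -> 0 < ht -> inRect S0 T0 HS HT a c hs ht ->
       a <= s <= a + hs -> c <= t <= c + ht -> hs < d -> ht < d ->
       Cmod (Bq a c hs ht) <= eps * (hs + ht) ^ 2) ->
  Bq S0 T0 HS HT = 0%C.
Proof.
  intros HSp HTp Hadd Hloc.
  destruct (Req_dec (Cmod (Bq S0 T0 HS HT)) 0) as [Z|NZ].
  { apply Cmod_eq_0; auto. }
  exfalso. set (B0 := Cmod (Bq S0 T0 HS HT)) in *.
  assert (HB0 : 0 < B0) by (pose proof (Cmod_ge_0 (Bq S0 T0 HS HT)); fold B0 in H; lra).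
  set (a := fun n => fst (corner Bq S0 T0 HS HT n)).
  set (c := fun n => snd (corner Bq S0 T0 HS HT n)).
  assert (Hp : forall n, 0 < 2 ^ n) by (intros; apply pow_lt; lra).
  assert (Inv : forall n, inRect S0 T0 HS HT (a n) (c n) (HS / 2 ^ n) (HT / 2 ^ n) /\
     B0 / (2 ^ n * 2 ^ n) <= Cmod (Bq (a n) (c n) (HS / 2 ^ n) (HT / 2 ^ n))).
  { induction n.
    - simpl. unfold a, c; simpl. replace (HS / 1) with HS by field. replace (HT / 1) with HT by field. unfold inRect. split. lra. fold B0. right. field.
    - destruct IHn as [IR IB].
      assert (Hh : 0 < HS / 2 ^ n) by (apply Rdiv_lt_0_compat; auto).
      assert (Hk : 0 < HT / 2 ^ n) by (apply Rdiv_lt_0_compat; auto).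
      pose proof (choose4_spec Bq (a n) (c n) (HS / 2 ^ n) (HT / 2 ^ n) (Hadd _ _ _ _ Hh Hk IR)) as [Ha [Hc Hb]].
      unfold a, c in *. simpl. pose proof (Hp n) as Hpn. replace (HS / (2 * 2 ^ n)) with (HS / 2 ^ n / 2) by (field; lra). replace (HT / (2 * 2 ^ n)) with (HT / 2 ^ n / 2) by (field; lra).
      destruct IR as [I1 [I2 [I3 I4]]].
      split.
      + unfold inRect. destruct Ha as [Ha|Ha]; destruct Hc as [Hc|Hc]; rewrite Ha, Hc; lra.
      + eapply Rle_trans; [|exact Hb].
        replace (B0 / (2 * 2 ^ n * (2 * 2 ^ n))) with (B0 / (2 ^ n * 2 ^ n) / 4).
        2:{ field. lra. }
        unfold Rdiv at 1. unfold Rdiv at 2. apply Rmult_le_compat_r; lra. }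
  assert (Step : forall n, a n <= a (S n) /\ a (S n) + HS / 2 ^ S n <= a n + HS / 2 ^ n /\
                          c n <= c (S n) /\ c (S n) + HT / 2 ^ S n <= c n + HT / 2 ^ n).
  { intros n.
    assert (Hh : 0 < HS / 2 ^ n) by (apply Rdiv_lt_0_compat; auto).
    assert (Hk : 0 < HT / 2 ^ n) by (apply Rdiv_lt_0_compat; auto).
    pose proof (choose4_spec Bq (a n) (c n) (HS / 2 ^ n) (HT / 2 ^ n) (Hadd _ _ _ _ Hh Hk (proj1 (Inv n)))) as [Ha [Hc _]].
    unfold a, c in *. simpl. pose proof (Hp n) as Hpn. replace (HS / (2 * 2 ^ n)) with (HS / 2 ^ n / 2) by (field; lra). replace (HT / (2 * 2 ^ n)) with (HT / 2 ^ n / 2) by (field; lra).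
    destruct Ha as [Ha|Ha]; destruct Hc as [Hc|Hc]; rewrite Ha, Hc; lra. }
  assert (Mono : forall n k, a n <= a (k + n)%nat /\ a (k + n)%nat + HS / 2 ^ (k + n) <= a n + HS / 2 ^ n /\
                             c n <= c (k + n)%nat /\ c (k + n)%nat + HT / 2 ^ (k + n) <= c n + HT / 2 ^ n).
  { intros n k. induction k.
    - simpl. lra.
    - rewrite Nat.add_succ_l. pose proof (Step (k + n)%nat). lra. }
  assert (Hsa : forall n m, a m <= a n + HS / 2 ^ n).
  { intros n m. destruct (Compare_dec.le_lt_dec n m) as [L|L].
    - replace m with ((m - n) + n)%nat by lia. pose proof (Mono n (m - n)%nat).
      assert (0 < HS / 2 ^ (m - n + n)) by (apply Rdiv_lt_0_compat; auto). lra.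
    - replace n with ((n - m) + m)%nat by lia. pose proof (Mono m (n - m)%nat).
      assert (0 < HS / 2 ^ (n - m + m)) by (apply Rdiv_lt_0_compat; auto). lra. }
  assert (Hsc : forall n m, c m <= c n + HT / 2 ^ n).
  { intros n m. destruct (Compare_dec.le_lt_dec n m) as [L|L].
    - replace m with ((m - n) + n)%nat by lia. pose proof (Mono n (m - n)%nat).
      assert (0 < HT / 2 ^ (m - n + n)) by (apply Rdiv_lt_0_compat; auto). lra.
    - replace n with ((n - m) + m)%nat by lia. pose proof (Mono m (n - m)%nat).
      assert (0 < HT / 2 ^ (n - m + m)) by (apply Rdiv_lt_0_compat; auto). lra. }
  destruct (completeness (fun x => exists n, x = a n)) as [sA [HsA1 HsA2]].
  { exists (S0 + HS). intros x [n ->]. pose proof (Hsa O n) as H'. unfold a in *. simpl in H'. replace (HS/1) with HS in H' by field. lra. }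
  { exists (a O). exists O. auto. }
  destruct (completeness (fun x => exists n, x = c n)) as [tC [HtC1 HtC2]].
  { exists (T0 + HT). intros x [n ->]. pose proof (Hsc O n) as H'. unfold c in *. simpl in H'. replace (HT/1) with HT in H' by field. lra. }
  { exists (c O). exists O. auto. }
  assert (Ha1 : forall n, a n <= sA) by (intros n; apply HsA1; exists n; auto).
  assert (Ha2 : forall n, sA <= a n + HS / 2 ^ n) by (intros n; apply HsA2; intros x [m ->]; apply Hsa).
  assert (Hc1 : forall n, c n <= tC) by (intros n; apply HtC1; exists n; auto).
  assert (Hc2 : forall n, tC <= c n + HT / 2 ^ n) by (intros n; apply HtC2; intros x [m ->]; apply Hsc).
  assert (a O = S0 /\ c O = T0) as [A0 C0] by (unfold a, c; simpl; auto).
  assert (Hsr : S0 <= sA <= S0 + HS) by (pose proof (Ha1 O); pose proof (Ha2 O) as H'; simpl in H'; replace (HS/1) with HS in H' by field; lra).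
  assert (Htr : T0 <= tC <= T0 + HT) by (pose proof (Hc1 O); pose proof (Hc2 O) as H'; simpl in H'; replace (HT/1) with HT in H' by field; lra).
  set (eps := B0 / (2 * (HS + HT) ^ 2)).
  assert (Heps : 0 < eps) by (unfold eps; apply Rdiv_lt_0_compat; auto; nra).
  destruct (Hloc sA tC Hsr Htr eps Heps) as [d [Hd Hl]].
  destruct (small_pow2 HS d HSp Hd) as [n1 Hn1].
  destruct (small_pow2 HT d HTp Hd) as [n2 Hn2].
  set (n := (n1 + n2)%nat).
  assert (Hsmall : forall x m m', 0 < x -> (m <= m')%nat -> x / 2 ^ m' <= x / 2 ^ m).
  { intros x m m' Hx Hm. unfold Rdiv. apply Rmult_le_compat_l. lra.
    apply Rinv_le_contravar. auto. apply Rle_pow; [lra|lia]. }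
  assert (HS / 2 ^ n < d) by (apply Rle_lt_trans with (HS / 2 ^ n1); [apply Hsmall; [auto|unfold n; lia]|auto]).
  assert (HT / 2 ^ n < d) by (apply Rle_lt_trans with (HT / 2 ^ n2); [apply Hsmall; [auto|unfold n; lia]|auto]).
  destruct (Inv n) as [IR IB].
  assert (Hh : 0 < HS / 2 ^ n) by (apply Rdiv_lt_0_compat; auto).
  assert (Hk : 0 < HT / 2 ^ n) by (apply Rdiv_lt_0_compat; auto).
  specialize (Hl (a n) (c n) (HS / 2 ^ n) (HT / 2 ^ n) Hh Hk IR
     (conj (Ha1 n) (Ha2 n)) (conj (Hc1 n) (Hc2 n)) H H0).
  assert (eps * (HS / 2 ^ n + HT / 2 ^ n) ^ 2 = B0 / (2 ^ n * 2 ^ n) / 2).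
  { unfold eps. specialize (Hp n). field. split. lra. apply Rgt_not_eq. nra. }
  assert (0 < B0 / (2 ^ n * 2 ^ n)) by (apply Rdiv_lt_0_compat; auto; specialize (Hp n); nra).
  lra.
Qed.

Definition Es (G : C -> C) (Phi Phis : R -> R -> C) (t a b : R) : C :=
  CInt (fun s => G (Phi s t) * Phis s t)%C a b.
Definition Et (G : C -> C) (Phi Phit : R -> R -> C) (s c d : R) : C :=
  CInt (fun t => G (Phi s t) * Phit s t)%C c d.
Definition Bnd (G : C -> C) (Phi Phis Phit : R -> R -> C) (a c hs ht : R) : C :=
  (Es G Phi Phis c a (a + hs) + Et G Phi Phit (a + hs) c (c + ht)
   - Es G Phi Phis (c + ht) a (a + hs) - Et G Phi Phit a c (c + ht))%C.


Lemma Rmin_le_l a b : a <= b -> Rmin a b = a. Proof. intros; apply Rmin_left; auto. Qed.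
Lemma Rmax_le_r a b : a <= b -> Rmax a b = b. Proof. intros; apply Rmax_right; auto. Qed.

Lemma goursat (K : C -> C) (Phi Phis Phit : R -> R -> C) (S0 T0 HS HT : R) :
  0 < HS -> 0 < HT ->
  (forall s t, S0 <= s <= S0 + HS -> T0 <= t <= T0 + HT -> cder (fun s => Phi s t) s (Phis s t)) ->
  (forall s t, S0 <= s <= S0 + HS -> T0 <= t <= T0 + HT -> cder (fun t => Phi s t) t (Phit s t)) ->
  (forall s t, S0 <= s <= S0 + HS -> T0 <= t <= T0 + HT -> ccR (fun s => Phis s t) s) ->
  (forall s t, S0 <= s <= S0 + HS -> T0 <= t <= T0 + HT -> ccR (fun t => Phit s t) t) ->
  (exists M, 0 <= M /\ forall s t s' t', S0 <= s <= S0 + HS -> T0 <= t <= T0 + HT ->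
      S0 <= s' <= S0 + HS -> T0 <= t' <= T0 + HT ->
      Cmod (Phi s t - Phi s' t') <= M * (Rabs (s - s') + Rabs (t - t'))) ->
  (exists M, 0 <= M /\ forall s t, S0 <= s <= S0 + HS -> T0 <= t <= T0 + HT ->
      Cmod (Phis s t) <= M /\ Cmod (Phit s t) <= M) ->
  (forall s t, S0 <= s <= S0 + HS -> T0 <= t <= T0 + HT -> exists b, hol K (Phi s t) b) ->
  Bnd K Phi Phis Phit S0 T0 HS HT = 0%C.
Proof.
  intros HSp HTp Hds Hdt Hcs Hct [M [HM Hlip]] [M2 [HM2 Hbd]] Hhol.
  assert (OKs : forall (G : C -> C) t a b, T0 <= t <= T0 + HT -> S0 <= a -> a <= b -> b <= S0 + HS ->
     (forall s, S0 <= s <= S0 + HS -> ccC G (Phi s t)) ->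
     cint_ok (fun s => G (Phi s t) * Phis s t)%C a b).
  { intros G t a b Ht Ha Hab Hb HG s Hs. rewrite Rmin_le_l, Rmax_le_r in Hs by auto.
    apply ccR_mult. apply ccR_comp. apply HG; lra. eapply cder_ccR. apply Hds; lra.
    apply Hcs; lra. }
  assert (OKt : forall (G : C -> C) s c d, S0 <= s <= S0 + HS -> T0 <= c -> c <= d -> d <= T0 + HT ->
     (forall t, T0 <= t <= T0 + HT -> ccC G (Phi s t)) ->
     cint_ok (fun t => G (Phi s t) * Phit s t)%C c d).
  { intros G s c d Hs Hc Hcd Hd HG t Ht. rewrite Rmin_le_l, Rmax_le_r in Ht by auto.
    apply ccR_mult. apply ccR_comp. apply HG; lra. eapply cder_ccR. apply Hdt; lra.
    apply Hct; lra. }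
  assert (KC : forall s t, S0 <= s <= S0 + HS -> T0 <= t <= T0 + HT -> ccC K (Phi s t)).
  { intros s t Hs Ht. destruct (Hhol s t Hs Ht) as [b Hb]. eapply hol_ccC; eauto. }
  apply bisect.
  - auto.
  - auto.
  - intros a c hs ht Hh Hk [I1 [I2 [I3 I4]]]. unfold Bnd.
    replace (a + hs / 2 + hs / 2) with (a + hs) by field.
    replace (c + ht / 2 + ht / 2) with (c + ht) by field.
    assert (EsC : forall t, T0 <= t <= T0 + HT -> Es K Phi Phis t a (a + hs) =
       (Es K Phi Phis t a (a + hs / 2) + Es K Phi Phis t (a + hs / 2) (a + hs))%C).
    { intros t Ht. unfold Es. symmetry. apply CInt_Chasles; apply OKs; auto; try lra;
      intros; apply KC; lra. }
    assert (EtC : forall s, S0 <= s <= S0 + HS -> Et K Phi Phit s c (c + ht) =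
       (Et K Phi Phit s c (c + ht / 2) + Et K Phi Phit s (c + ht / 2) (c + ht))%C).
    { intros s Hs. unfold Et. symmetry. apply CInt_Chasles; apply OKt; auto; try lra;
      intros; apply KC; lra. }
    rewrite (EsC c), (EsC (c + ht)), (EtC a), (EtC (a + hs)) by lra.
    ring.
  - intros s t Hs Ht eps Heps.
    destruct (Hhol s t Hs Ht) as [b Hb].
    set (p := Phi s t).
    set (eps' := eps / (4 * (M + 1) * (M2 + 1))).
    assert (Heps' : 0 < eps') by (unfold eps'; apply Rdiv_lt_0_compat; auto; nra).
    destruct (Hb eps' Heps') as [d' [Hd' Hb']]. fold p in Hb'.
    exists (d' / (2 * (M + 1))). split. { apply Rdiv_lt_0_compat; lra. }
    intros a c hs ht Hh Hk [I1 [I2 [I3 I4]]] Hsa Htc Hhd Hkd.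
    set (L := fun w : C => (K p - p * b + b * w)%C).
    set (D := fun w : C => (K w - L w)%C).
    assert (LC : forall w, ccC L w).
    { intros w. apply hol_ccC with b. intros e He. exists 1. split. lra. intros v Hv.
      unfold L. replace (K p - p * b + b * v - (K p - p * b + b * w) - (v - w) * b)%C with (RtoC 0) by ring.
      rewrite Cmod_0. pose proof (Cmod_ge_0 (v - w)). nra. }
    assert (DC : forall s t, S0 <= s <= S0 + HS -> T0 <= t <= T0 + HT -> ccC D (Phi s t)).
    { intros s0 t0 Hs0 Ht0 e He. destruct (KC s0 t0 Hs0 Ht0 (e/2) ltac:(lra)) as [d1 [Hd1 H1]].
      destruct (LC (Phi s0 t0) (e/2) ltac:(lra)) as [d2 [Hd2 H2]].
      exists (Rmin d1 d2). split. apply Rmin_pos; auto. intros v Hv.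
      pose proof (Rmin_l d1 d2). pose proof (Rmin_r d1 d2).
      specialize (H1 v ltac:(lra)). specialize (H2 v ltac:(lra)).
      unfold D. replace (K v - L v - (K (Phi s0 t0) - L (Phi s0 t0)))%C with
        ((K v - K (Phi s0 t0)) + - (L v - L (Phi s0 t0)))%C by ring.
      eapply Rle_lt_trans. apply Cmod_triangle. rewrite Cmod_opp. lra. }
    set (Q := fun w : C => ((K p - p * b) * w + (b / 2) * (w * w))%C).
    assert (FTs : forall t0 a0 b0, T0 <= t0 <= T0 + HT -> S0 <= a0 -> a0 <= b0 -> b0 <= S0 + HS ->
        Es L Phi Phis t0 a0 b0 = (Q (Phi b0 t0) - Q (Phi a0 t0))%C).
    { intros t0 a0 b0 Ht0 Ha0 Hab Hb0. unfold Es.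
      apply CInt_FTC with (g := fun s0 => Q (Phi s0 t0)).
      - intros s0 Hs0. rewrite Rmin_le_l, Rmax_le_r in Hs0 by auto.
        pose proof (Hds s0 t0 ltac:(lra) Ht0) as HD.
        pose proof (cder_plus _ _ _ _ _ (cder_mult _ _ _ _ _ (cder_const (K p - p*b) _) HD)
           (cder_mult _ _ _ _ _ (cder_const (b/2) _) (cder_mult _ _ _ _ _ HD HD))) as HQ.
        unfold Q. eapply cder_eq; [|exact HQ]. cbv beta. unfold L. field.
      - intros s0 Hs0. rewrite Rmin_le_l, Rmax_le_r in Hs0 by auto.
        apply ccR_mult. apply ccR_comp. apply LC. eapply cder_ccR. apply Hds; lra. apply Hcs; lra. }
    assert (FTt : forall s0 c0 d0, S0 <= s0 <= S0 + HS -> T0 <= c0 -> c0 <= d0 -> d0 <= T0 + HT ->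
        Et L Phi Phit s0 c0 d0 = (Q (Phi s0 d0) - Q (Phi s0 c0))%C).
    { intros s0 c0 d0 Hs0 Hc0 Hcd Hd0. unfold Et.
      apply CInt_FTC with (g := fun t0 => Q (Phi s0 t0)).
      - intros t0 Ht0. rewrite Rmin_le_l, Rmax_le_r in Ht0 by auto.
        pose proof (Hdt s0 t0 Hs0 ltac:(lra)) as HD.
        pose proof (cder_plus _ _ _ _ _ (cder_mult _ _ _ _ _ (cder_const (K p - p*b) _) HD)
           (cder_mult _ _ _ _ _ (cder_const (b/2) _) (cder_mult _ _ _ _ _ HD HD))) as HQ.
        unfold Q. eapply cder_eq; [|exact HQ]. cbv beta. unfold L. field.
      - intros t0 Ht0. rewrite Rmin_le_l, Rmax_le_r in Ht0 by auto.
        apply ccR_mult. apply ccR_comp. apply LC. eapply cder_ccR. apply Hdt; lra. apply Hct; lra. }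
    assert (BL : Bnd L Phi Phis Phit a c hs ht = 0%C).
    { unfold Bnd. rewrite !FTs, !FTt by lra. ring. }
    assert (Split : Bnd K Phi Phis Phit a c hs ht = Bnd D Phi Phis Phit a c hs ht).
    { assert (E1 : forall t0, T0 <= t0 <= T0 + HT -> Es K Phi Phis t0 a (a + hs) =
          (Es D Phi Phis t0 a (a + hs) + Es L Phi Phis t0 a (a + hs))%C).
      { intros t0 Ht0. unfold Es. rewrite <- CInt_plus.
        apply CInt_ext. intros; unfold D; ring.
        apply OKs; auto; lra. apply OKs; auto; lra. }
      assert (E2 : forall s0, S0 <= s0 <= S0 + HS -> Et K Phi Phit s0 c (c + ht) =
          (Et D Phi Phit s0 c (c + ht) + Et L Phi Phit s0 c (c + ht))%C).
      { intros s0 Hs0. unfold Et. rewrite <- CInt_plus.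
        apply CInt_ext. intros; unfold D; ring.
        apply OKt; auto; lra. apply OKt; auto; lra. }
      unfold Bnd in *. rewrite (E1 c), (E1 (c + ht)), (E2 a), (E2 (a + hs)) by lra.
      replace (Es D Phi Phis c a (a + hs) + Es L Phi Phis c a (a + hs) +
        (Et D Phi Phit (a + hs) c (c + ht) + Et L Phi Phit (a + hs) c (c + ht)) -
        (Es D Phi Phis (c + ht) a (a + hs) + Es L Phi Phis (c + ht) a (a + hs)) -
        (Et D Phi Phit a c (c + ht) + Et L Phi Phit a c (c + ht)))%C with
        ((Es D Phi Phis c a (a + hs) + Et D Phi Phit (a + hs) c (c + ht) -
          Es D Phi Phis (c + ht) a (a + hs) - Et D Phi Phit a c (c + ht)) +
         (Es L Phi Phis c a (a + hs) + Et L Phi Phit (a + hs) c (c + ht) -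
          Es L Phi Phis (c + ht) a (a + hs) - Et L Phi Phit a c (c + ht)))%C by ring.
      rewrite BL. ring. }
    rewrite Split.
    assert (Dbd : forall s0 t0, a <= s0 <= a + hs -> c <= t0 <= c + ht ->
        Cmod (D (Phi s0 t0)) <= eps' * (M * (hs + ht))).
    { intros s0 t0 Hs0 Ht0.
      assert (Hdist : Cmod (Phi s0 t0 - p) <= M * (hs + ht)).
      { eapply Rle_trans. apply Hlip; lra. apply Rmult_le_compat_l; auto.
        assert (Rabs (s0 - s) <= hs) by (apply Rabs_le; lra).
        assert (Rabs (t0 - t) <= ht) by (apply Rabs_le; lra). lra. }
      assert (Hlt : Cmod (Phi s0 t0 - p) < d').
      { eapply Rle_lt_trans. apply Hdist.
        apply Rle_lt_trans with (M * (2 * (d' / (2 * (M + 1))))). apply Rmult_le_compat_l; lra.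
        replace (M * (2 * (d' / (2 * (M + 1))))) with (d' * (M / (M + 1))) by (field; lra).
        assert (M / (M + 1) < 1). { apply Rmult_lt_reg_r with (M + 1). lra.
          replace (M / (M + 1) * (M + 1)) with M by (field; lra). lra. }
        nra. }
      specialize (Hb' _ Hlt). unfold D, L.
      replace (K (Phi s0 t0) - (K p - p * b + b * Phi s0 t0))%C with
        (K (Phi s0 t0) - K p - (Phi s0 t0 - p) * b)%C by ring.
      eapply Rle_trans. apply Hb'. apply Rmult_le_compat_l; lra. }
    assert (Es_bd : forall t0, c <= t0 <= c + ht -> Cmod (Es D Phi Phis t0 a (a + hs)) <= 2 * (eps' * (M * (hs + ht)) * M2) * hs).
    { intros t0 Ht0. unfold Es. apply Rle_trans with (2 * (eps' * (M * (hs + ht)) * M2) * (a + hs - a)); [|right; ring].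
      apply CInt_bound. lra. apply OKs; try lra. intros; apply DC; lra.
      intros s0 Hs0. rewrite Cmod_mult. apply Rmult_le_compat.
      apply Cmod_ge_0. apply Cmod_ge_0. apply Dbd; lra. apply Hbd; lra. }
    assert (Et_bd : forall s0, a <= s0 <= a + hs -> Cmod (Et D Phi Phit s0 c (c + ht)) <= 2 * (eps' * (M * (hs + ht)) * M2) * ht).
    { intros s0 Hs0. unfold Et. apply Rle_trans with (2 * (eps' * (M * (hs + ht)) * M2) * (c + ht - c)); [|right; ring].
      apply CInt_bound. lra. apply OKt; try lra. intros; apply DC; lra.
      intros t0 Ht0. rewrite Cmod_mult. apply Rmult_le_compat.
      apply Cmod_ge_0. apply Cmod_ge_0. apply Dbd; lra. apply Hbd; lra. }
    unfold Bnd.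
    pose proof (Es_bd c ltac:(lra)). pose proof (Es_bd (c + ht) ltac:(lra)).
    pose proof (Et_bd a ltac:(lra)). pose proof (Et_bd (a + hs) ltac:(lra)).
    set (e1 := Es D Phi Phis c a (a + hs)) in *. set (e2 := Et D Phi Phit (a + hs) c (c + ht)) in *.
    set (e3 := Es D Phi Phis (c + ht) a (a + hs)) in *. set (e4 := Et D Phi Phit a c (c + ht)) in *.
    assert (Cmod (e1 + e2 - e3 - e4)%C <= Cmod e1 + Cmod e2 + Cmod e3 + Cmod e4).
    { unfold Cminus. eapply Rle_trans. apply Cmod_triangle. rewrite Cmod_opp.
      eapply Rle_trans. apply Rplus_le_compat_r. apply Cmod_triangle. rewrite Cmod_opp.
      eapply Rle_trans. apply Rplus_le_compat_r. apply Rplus_le_compat_r. apply Cmod_triangle. lra. }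
    assert (2 * (eps' * (M * (hs + ht)) * M2) * hs * 2 + 2 * (eps' * (M * (hs + ht)) * M2) * ht * 2
            <= eps * (hs + ht) ^ 2).
    { unfold eps'. 
      replace (2 * (eps / (4 * (M + 1) * (M2 + 1)) * (M * (hs + ht)) * M2) * hs * 2 +
        2 * (eps / (4 * (M + 1) * (M2 + 1)) * (M * (hs + ht)) * M2) * ht * 2) with
        (eps * (hs + ht) ^ 2 * ((M / (M + 1)) * (M2 / (M2 + 1)))) by (field; lra).
      assert (0 <= M / (M + 1) <= 1). { split. apply Rdiv_le_0_compat; lra.
        apply Rmult_le_reg_r with (M + 1). lra. replace (M / (M + 1) * (M + 1)) with M by (field; lra). lra. }
      assert (0 <= M2 / (M2 + 1) <= 1). { split. apply Rdiv_le_0_compat; lra.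
        apply Rmult_le_reg_r with (M2 + 1). lra. replace (M2 / (M2 + 1) * (M2 + 1)) with M2 by (field; lra). lra. }
      assert (0 <= eps * (hs + ht) ^ 2) by (apply Rmult_le_pos; [lra| apply pow2_ge_0]).
      assert (0 <= (M / (M + 1)) * (M2 / (M2 + 1)) <= 1) by (split; nra).
      nra. }
    lra.
Qed.

Definition cis (t : R) : C := (cos t, sin t).
Definition icis (t : R) : C := (- sin t, cos t).

Lemma Cmod_cis t : Cmod (cis t) = 1.
Proof. unfold Cmod, cis; simpl. replace (cos t * (cos t * 1) + sin t * (sin t * 1)) with 1.
  apply sqrt_1. pose proof (sin2_cos2 t). unfold Rsqr in H. lra. Qed.
Lemma Cmod_icis t : Cmod (icis t) = 1.
Proof. unfold Cmod, icis; simpl. replace (- sin t * (- sin t * 1) + cos t * (cos t * 1)) with 1.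
  apply sqrt_1. pose proof (sin2_cos2 t). unfold Rsqr in H. lra. Qed.
Lemma icis_eq t : icis t = (Ci * cis t)%C.
Proof. unfold icis, cis, Ci. apply injective_projections; simpl; ring. Qed.

Lemma sin_lip a b : Rabs (sin a - sin b) <= Rabs (a - b).
Proof.
  destruct (MVT_abs sin cos b a) as [c [Hc _]]. { intros; apply derivable_pt_lim_sin. }
  rewrite Hc. pose proof (COS_bound c). assert (Rabs (cos c) <= 1) by (apply Rabs_le; lra).
  pose proof (Rabs_pos (a - b)). nra.
Qed.
Lemma cos_lip a b : Rabs (cos a - cos b) <= Rabs (a - b).
Proof.
  destruct (MVT_abs cos (fun x => - sin x) b a) as [c [Hc _]]. { intros; apply derivable_pt_lim_cos. }
  rewrite Hc. pose proof (SIN_bound c). rewrite Rabs_Ropp. assert (Rabs (sin c) <= 1) by (apply Rabs_le; lra).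
  pose proof (Rabs_pos (a - b)). nra.
Qed.
Lemma cis_lip a b : Cmod (cis a - cis b) <= 2 * Rabs (a - b).
Proof.
  eapply Rle_trans. apply Cmod_le_sum. unfold cis; simpl.
  pose proof (sin_lip a b). pose proof (cos_lip a b). unfold Rminus in *. lra.
Qed.

Definition Phi_c (c : C) (eps r : R) (s t : R) : C := (RtoC ((1 - s) * eps + s * r) * cis t + RtoC (1 - s) * c)%C.
Definition Phis_c (c : C) (eps r : R) (s t : R) : C := (RtoC (r - eps) * cis t - c)%C.
Definition Phit_c (c : C) (eps r : R) (s t : R) : C := (RtoC ((1 - s) * eps + s * r) * icis t)%C.

Lemma Phi_c_ds c eps r s t : cder (fun s => Phi_c c eps r s t) s (Phis_c c eps r s t).
Proof.
  unfold Phi_c, Phis_c, cis; split; simpl.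
  - eapply is_derive_ext. { intros x. simpl. reflexivity. } auto_derive; auto. simpl. ring.
  - eapply is_derive_ext. { intros x. simpl. reflexivity. } auto_derive; auto. simpl. ring.
Qed.

Lemma Phi_c_dt c eps r s t : cder (fun t => Phi_c c eps r s t) t (Phit_c c eps r s t).
Proof.
  unfold Phi_c, Phit_c, cis, icis; split; simpl.
  - eapply is_derive_ext. { intros x. simpl. reflexivity. } auto_derive; auto. simpl. ring.
  - eapply is_derive_ext. { intros x. simpl. reflexivity. } auto_derive; auto. simpl. ring.
Qed.

Lemma ccR_cis t : ccR cis t.
Proof.
  apply ccR_of; unfold cis; simpl; apply continuity_pt_filterlim.
  apply continuity_cos. apply continuity_sin.
Qed.
Lemma ccR_icis t : ccR icis t.
Proof.
  apply ccR_of; unfold icis; simpl; apply continuity_pt_filterlim.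
  apply continuity_pt_opp. apply continuity_sin. apply continuity_cos.
Qed.

Lemma Cmod_RtoC_mult (x : R) (z : C) : Cmod (x * z)%C = Rabs x * Cmod z.
Proof. rewrite Cmod_mult, Cmod_R. auto. Qed.

Lemma Cmod_minus_ge (u v : C) : Cmod u - Cmod v <= Cmod (u - v).
Proof.
  assert (Cmod u <= Cmod (u - v) + Cmod v).
  { replace u with ((u - v) + v)%C at 1 by ring. apply Cmod_triangle. }
  lra.
Qed.

Lemma circle_deform (K : C -> C) (c : C) (eps r : R) :
  0 < eps -> eps + Cmod c < 1 -> 0 < r -> r < 1 -> Cmod c < r ->
  (forall w, Cmod w < 1 -> w <> c -> exists b, hol K w b) ->
  CInt (fun t => K (r * cis t) * (r * icis t))%C 0 (2 * PI) =
  CInt (fun t => K (c + eps * cis t) * (eps * icis t))%C 0 (2 * PI).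
Proof.
  intros He Hec Hr Hr1 Hcr HK.
  pose proof (Cmod_ge_0 c) as Hc0.
  assert (HPI : 0 < 2 * PI) by (pose proof PI_RGT_0; lra).
  assert (HA : forall s, 0 <= s <= 1 -> 0 < (1 - s) * eps + s * r <= 1).
  { intros s Hs. split. nra. nra. }
  pose proof (goursat K (Phi_c c eps r) (Phis_c c eps r) (Phit_c c eps r) 0 0 1 (2 * PI)
    ltac:(lra) HPI) as G.
  rewrite Rplus_0_l, Rplus_0_l in G.
  assert (Z : Bnd K (Phi_c c eps r) (Phis_c c eps r) (Phit_c c eps r) 0 0 1 (2 * PI) = 0%C).
  { apply G; clear G.
    - intros; apply Phi_c_ds.
    - intros; apply Phi_c_dt.
    - intros; unfold Phis_c; apply ccR_const.
    - intros s t Hs Ht; unfold Phit_c. apply ccR_mult. apply ccR_const. apply ccR_icis.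
    - exists (Rabs (r - eps) + Cmod c + 2). split. pose proof (Rabs_pos (r - eps)); lra.
      intros s t s' t' Hs Ht Hs' Ht'. unfold Phi_c.
      replace (RtoC ((1 - s) * eps + s * r) * cis t + RtoC (1 - s) * c -
              (RtoC ((1 - s') * eps + s' * r) * cis t' + RtoC (1 - s') * c))%C with
        (RtoC ((s - s') * (r - eps)) * cis t + RtoC ((1 - s') * eps + s' * r) * (cis t - cis t') + - (RtoC (s - s') * c))%C.
      2:{ repeat rewrite ?RtoC_plus, ?RtoC_mult, ?RtoC_minus. ring. }
      eapply Rle_trans. apply Cmod_triangle. eapply Rle_trans. apply Rplus_le_compat_r. apply Cmod_triangle.
      rewrite Cmod_opp, !Cmod_RtoC_mult, Cmod_cis.
      pose proof (cis_lip t t'). specialize (HA s' Hs').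
      rewrite Rabs_mult, (Rabs_pos_eq ((1 - s') * eps + s' * r)) by lra.
      pose proof (Rabs_pos (s - s')). pose proof (Rabs_pos (t - t')). pose proof (Rabs_pos (r - eps)).
      assert (((1 - s') * eps + s' * r) * Cmod (cis t - cis t') <= 2 * Rabs (t - t')).
      { apply Rle_trans with (1 * Cmod (cis t - cis t')). apply Rmult_le_compat_r. apply Cmod_ge_0. lra. lra. }
      nra.
    - exists (Rabs (r - eps) + Cmod c + 1). split. pose proof (Rabs_pos (r - eps)); lra.
      intros s t Hs Ht. unfold Phis_c, Phit_c. split.
      + unfold Cminus. eapply Rle_trans. apply Cmod_triangle. rewrite Cmod_opp, Cmod_RtoC_mult, Cmod_cis. lra.
      + rewrite Cmod_RtoC_mult, Cmod_icis. specialize (HA s Hs). rewrite Rabs_pos_eq by lra. rewrite Rmult_1_r. pose proof (Rabs_pos (r - eps)). lra.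
    - intros s t Hs Ht. apply HK.
      + unfold Phi_c. eapply Rle_lt_trans. apply Cmod_triangle. rewrite !Cmod_RtoC_mult, Cmod_cis.
        specialize (HA s Hs). rewrite !Rabs_pos_eq by lra. rewrite Rmult_1_r.
        assert (0 < (1-s)*(1-eps-Cmod c) + s*(1-r)).
        { destruct (Req_dec s 0) as [->|Hs0]. lra.
          assert (0 <= (1-s)*(1-eps-Cmod c)) by nra. assert (0 < s*(1-r)) by nra. lra. }
        nra.
      + intros E. unfold Phi_c in E.
        assert (E2 : (RtoC ((1 - s) * eps + s * r) * cis t)%C = (RtoC s * c)%C).
        { replace (RtoC ((1 - s) * eps + s * r) * cis t)%C with
            (RtoC ((1 - s) * eps + s * r) * cis t + RtoC (1 - s) * c - c + RtoC s * c)%C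
            by (rewrite (RtoC_minus 1 s); ring). rewrite E. ring. }
        apply (f_equal Cmod) in E2. rewrite !Cmod_RtoC_mult, Cmod_cis in E2.
        specialize (HA s Hs). rewrite !Rabs_pos_eq in E2 by lra. rewrite Rmult_1_r in E2.
        assert (0 < (1-s)*eps + s*(r - Cmod c)).
        { destruct (Req_dec s 0) as [->|Hs0]. lra.
          assert (0 <= (1-s)*eps) by nra. assert (0 < s*(r - Cmod c)) by nra. lra. }
        nra. }
  unfold Bnd, Es, Et in Z. rewrite !Rplus_0_l in Z.
  assert (E0 : CInt (fun s => K (Phi_c c eps r s 0) * Phis_c c eps r s 0)%C 0 1 =
               CInt (fun s => K (Phi_c c eps r s (2 * PI)) * Phis_c c eps r s (2 * PI))%C 0 1).
  { apply CInt_ext. intros. unfold Phi_c, Phis_c, cis. rewrite cos_2PI, sin_2PI, cos_0, sin_0. auto. }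
  rewrite E0 in Z.
  assert (E1 : CInt (fun t => K (Phi_c c eps r 1 t) * Phit_c c eps r 1 t)%C 0 (2 * PI) =
               CInt (fun t => K (r * cis t) * (r * icis t))%C 0 (2 * PI)).
  { apply CInt_ext. intros. unfold Phi_c, Phit_c. f_equal. f_equal.
    rewrite Rminus_diag, Rmult_0_l, Rplus_0_l, Rmult_1_l. ring.
    rewrite Rminus_diag, Rmult_0_l, Rplus_0_l, Rmult_1_l. ring. }
  assert (E2 : CInt (fun t => K (Phi_c c eps r 0 t) * Phit_c c eps r 0 t)%C 0 (2 * PI) =
               CInt (fun t => K (c + eps * cis t) * (eps * icis t))%C 0 (2 * PI)).
  { apply CInt_ext. intros. unfold Phi_c, Phit_c. f_equal. f_equal.
    rewrite Rminus_0_r, Rmult_1_l, Rmult_0_l, Rplus_0_r. ring.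
    rewrite Rminus_0_r, Rmult_1_l, Rmult_0_l, Rplus_0_r. ring. }
  rewrite E1, E2 in Z.
  set (X := CInt (fun s => K (Phi_c c eps r s (2 * PI)) * Phis_c c eps r s (2 * PI))%C 0 1) in Z.
  set (Y1 := CInt (fun t => K (r * cis t) * (r * icis t))%C 0 (2 * PI)) in *.
  set (Y2 := CInt (fun t => K (c + eps * cis t) * (eps * icis t))%C 0 (2 * PI)) in *.
  assert (E : (Y1 = Y2 + (X + Y1 - X - Y2))%C) by ring. rewrite Z in E. rewrite E. ring.
Qed.

Definition D2 (f : C -> C) (w l : C) := @is_derive C_AbsRing (AbsRing_NormedModule C_AbsRing) f w l.

Lemma D2_hol K w b : D2 K w b -> hol K w b.
Proof.
  intros [_ H] eps Heps.
  specialize (H w (fun P HP => HP) (mkposreal eps Heps)).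
  apply (@locally_le_locally_norm C_AbsRing (AbsRing_NormedModule C_AbsRing)) in H. destruct H as [d Hd].
  exists d. split. apply cond_pos. intros v Hv. apply (Hd v). exact Hv.
Qed.

Lemma hol_D2 K w b : hol K w b -> D2 K w b.
Proof.
  intros H. split. apply is_linear_scal_l.
  intros x Hx. apply (@is_filter_lim_locally_unique C_AbsRing (AbsRing_NormedModule C_AbsRing)) in Hx. subst x.
  intros eps. apply (@locally_norm_le_locally C_AbsRing (AbsRing_NormedModule C_AbsRing)).
  destruct (H eps (cond_pos eps)) as [d [Hd H']].
  exists (mkposreal d Hd). intros v Hv. apply H'. exact Hv.
Qed.

Definition holC (K : C -> C) (w : C) := exists b, hol K w b.

Lemma holC_D2 K w : holC K w <-> exists b, D2 K w b.
Proof. split; intros [b Hb]; exists b; [apply hol_D2|apply D2_hol]; auto. Qed.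

Lemma holC_ex_derive K w : holC K w <-> @ex_derive C_AbsRing C_NormedModule K w.
Proof. split; intros [b Hb]; exists b; [apply hol_is_derive|apply is_derive_hol]; auto. Qed.

Lemma holC_ccC K w : holC K w -> ccC K w.
Proof. intros [b Hb]. eapply hol_ccC; eauto. Qed.

Lemma holC_mult f g w : holC f w -> holC g w -> holC (fun v => f v * g v)%C w.
Proof.
  intros Hf Hg. apply holC_D2. apply holC_D2 in Hf as [a Ha]. apply holC_D2 in Hg as [b Hb].
  eexists. apply (@is_derive_mult C_AbsRing f g w a b Ha Hb). intros; apply Cmult_comm.
Qed.

Lemma holC_plus f g w : holC f w -> holC g w -> holC (fun v => f v + g v)%C w.
Proof.
  intros Hf Hg. apply holC_D2. apply holC_D2 in Hf as [a Ha]. apply holC_D2 in Hg as [b Hb].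
  eexists. apply (@is_derive_plus C_AbsRing (AbsRing_NormedModule C_AbsRing) f g w a b Ha Hb).
Qed.

Lemma holC_minus f g w : holC f w -> holC g w -> holC (fun v => f v - g v)%C w.
Proof.
  intros Hf Hg. apply holC_D2. apply holC_D2 in Hf as [a Ha]. apply holC_D2 in Hg as [b Hb].
  eexists. apply (@is_derive_minus C_AbsRing (AbsRing_NormedModule C_AbsRing) f g w a b Ha Hb).
Qed.

Lemma holC_const (c : C) w : holC (fun _ => c) w.
Proof. apply holC_D2. eexists. apply (is_derive_const (K:=C_AbsRing) (V:=AbsRing_NormedModule C_AbsRing) c w). Qed.

Lemma holC_id w : holC (fun v => v) w.
Proof. apply holC_D2. eexists. apply (is_derive_id (K:=C_AbsRing) w). Qed.

Lemma holC_comp (f g : C -> C) w : holC f (g w) -> holC g w -> holC (fun v => f (g v)) w.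
Proof.
  intros Hf Hg. apply holC_D2. apply holC_D2 in Hf as [a Ha]. apply holC_D2 in Hg as [b Hb].
  eexists. apply (@is_derive_comp C_AbsRing (AbsRing_NormedModule C_AbsRing) f g w a b Ha Hb).
Qed.

Lemma holC_inv f w : holC f w -> f w <> 0%C -> holC (fun v => / f v)%C w.
Proof.
  intros Hf Hn. apply (holC_comp (fun v => / v)%C f w); auto.
  eexists. apply hol_inv. auto.
Qed.

Lemma holC_div f g w : holC f w -> holC g w -> g w <> 0%C -> holC (fun v => f v / g v)%C w.
Proof. intros. unfold Cdiv. apply holC_mult; auto. apply holC_inv; auto. Qed.

Lemma holC_pow f n w : holC f w -> holC (fun v => Cpow (f v) n) w.
Proof.
  intros Hf. induction n; simpl.
  - apply holC_const.
  - apply holC_mult; auto.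
Qed.

Lemma holC_ext f g w : (forall v, f v = g v) -> holC f w -> holC g w.
Proof.
  intros E [b Hb]. exists b. intros eps Heps. destruct (Hb eps Heps) as [d [Hd H]].
  exists d. split; auto. intros v Hv. rewrite <- !E. auto.
Qed.

Lemma Cmod_eps_cis (e t : R) : 0 <= e -> Cmod (RtoC e * cis t)%C = e.
Proof. intros He. rewrite Cmod_RtoC_mult, Cmod_cis, Rmult_1_r. apply Rabs_pos_eq; auto. Qed.
Lemma Cmod_eps_icis (e t : R) : 0 <= e -> Cmod (RtoC e * icis t)%C = e.
Proof. intros He. rewrite Cmod_RtoC_mult, Cmod_icis, Rmult_1_r. apply Rabs_pos_eq; auto. Qed.

Lemma ccR_circ (c : C) (e : R) t : ccR (fun t => c + RtoC e * cis t)%C t.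
Proof. apply ccR_plus. apply ccR_const. apply ccR_mult. apply ccR_const. apply ccR_cis. Qed.

Lemma cint_ok_circ (K : C -> C) (c : C) (e : R) :
  (forall t, holC K (c + RtoC e * cis t)%C) ->
  cint_ok (fun t => K (c + RtoC e * cis t) * (RtoC e * icis t))%C 0 (2 * PI).
Proof.
  intros HK t _. apply ccR_mult. apply ccR_comp. apply holC_ccC, HK. apply ccR_circ.
  apply ccR_mult. apply ccR_const. apply ccR_icis.
Qed.

Lemma cint_ok_circ0 (K : C -> C) (e : R) :
  (forall t, holC K (RtoC e * cis t)%C) ->
  cint_ok (fun t => K (RtoC e * cis t) * (RtoC e * icis t))%C 0 (2 * PI).
Proof.
  intros HK t _. apply ccR_mult. apply ccR_comp. apply holC_ccC, HK.
  apply ccR_mult. apply ccR_const. apply ccR_cis.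
  apply ccR_mult. apply ccR_const. apply ccR_icis.
Qed.

Lemma small_zero (x : C) : (forall eta, 0 < eta -> Cmod x < eta) -> x = 0%C.
Proof.
  intros H. apply Cmod_eq_0. pose proof (Cmod_ge_0 x).
  destruct (Req_dec (Cmod x) 0); auto. specialize (H (Cmod x) ltac:(lra)). lra.
Qed.

Lemma circle_zero (K : C -> C) (r : R) :
  0 < r -> r < 1 ->
  (forall w, Cmod w < 1 -> w <> 0%C -> holC K w) ->
  (exists B d0, 0 < d0 /\ forall w, 0 < Cmod w < d0 -> Cmod (K w) <= B) ->
  CInt (fun t => K (RtoC r * cis t) * (RtoC r * icis t))%C 0 (2 * PI) = 0%C.
Proof.
  intros Hr Hr1 HK [B [d0 [Hd0 HB]]].
  apply small_zero. intros eta Heta.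
  assert (HPI : 0 < PI) by apply PI_RGT_0.
  set (B' := Rabs B + 1).
  assert (HB' : 0 < B') by (unfold B'; pose proof (Rabs_pos B); lra).
  set (e := Rmin (Rmin (d0 / 2) (r / 2)) (eta / (8 * PI * B'))).
  assert (He1 : e <= d0 / 2) by (unfold e; eapply Rle_trans; [apply Rmin_l|apply Rmin_l]).
  assert (He2 : e <= r / 2) by (unfold e; eapply Rle_trans; [apply Rmin_l|apply Rmin_r]).
  assert (He3 : e <= eta / (8 * PI * B')) by (unfold e; apply Rmin_r).
  assert (He : 0 < e).
  { unfold e. apply Rmin_pos. apply Rmin_pos; lra. apply Rdiv_lt_0_compat; auto.
    apply Rmult_lt_0_compat; lra. }
  rewrite (circle_deform K 0%C e r);
    [| lra | rewrite Cmod_0; lra | lra | lra | rewrite Cmod_0; lra | intros w Hw Hw0; apply HK; auto].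
  apply Rle_lt_trans with (2 * (B' * e) * (2 * PI - 0)). apply CInt_bound.
  - lra.
  - apply cint_ok_circ. intros t. apply HK.
    + rewrite Cplus_0_l, Cmod_eps_cis; lra.
    + intros E. apply (f_equal Cmod) in E. rewrite Cplus_0_l, Cmod_eps_cis, Cmod_0 in E; lra.
  - intros t Ht. rewrite Cmod_mult, Cplus_0_l, Cmod_eps_icis by lra.
    apply Rmult_le_compat_r. lra.
    apply Rle_trans with B. apply HB. rewrite Cmod_eps_cis by lra. split; lra.
    unfold B'. pose proof (Rle_abs B). lra.
  - apply Rle_lt_trans with (2 * (B' * (eta / (8 * PI * B'))) * (2 * PI - 0)).
    { apply Rmult_le_compat_r. lra. apply Rmult_le_compat_l. lra. apply Rmult_le_compat_l; lra. }
    replace (2 * (B' * (eta / (8 * PI * B'))) * (2 * PI - 0)) with (eta / 2) by (field; lra).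
    lra.
Qed.

Lemma cauchy_formula (h : C -> C) (z : C) (r : R) :
  Cmod z < r -> r < 1 ->
  (forall w, Cmod w < 1 -> holC h w) ->
  CInt (fun t => (h (RtoC r * cis t) / (RtoC r * cis t - z)) * (RtoC r * icis t))%C 0 (2 * PI)
  = (RtoC (2 * PI) * (Ci * h z))%C.
Proof.
  intros Hzr Hr1 Hh.
  assert (HPI : 0 < PI) by apply PI_RGT_0.
  pose proof (Cmod_ge_0 z) as Hz0.
  assert (Hr : 0 < r) by lra.
  assert (Hcis : forall t, cis t <> 0%C).
  { intros t E. apply (f_equal Cmod) in E. rewrite Cmod_cis, Cmod_0 in E. lra. }
  set (K := fun w => (h w / (w - z))%C).
  assert (HK : forall w, Cmod w < 1 -> w <> z -> holC K w).
  { intros w Hw Hwz. unfold K. apply holC_div. apply Hh; auto.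
    apply holC_minus. apply holC_id. apply holC_const.
    intros E. apply Hwz. replace w with ((w - z) + z)%C by ring. rewrite E. ring. }
  assert (X : CInt (fun t => (h (RtoC r * cis t) / (RtoC r * cis t - z)) * (RtoC r * icis t))%C 0 (2 * PI)
      = CInt (fun t => K (RtoC r * cis t) * (RtoC r * icis t))%C 0 (2 * PI)) by reflexivity.
  rewrite X. clear X.
  set (L := CInt (fun t => K (RtoC r * cis t) * (RtoC r * icis t))%C 0 (2 * PI)).
  set (R0 := (RtoC (2 * PI) * (Ci * h z))%C).
  assert (HR0 : R0 = CInt (fun _ => Ci * h z)%C 0 (2 * PI)).
  { rewrite CInt_const. unfold R0. ring. }
  cut ((L - R0)%C = 0%C). { intros E. replace L with ((L - R0) + R0)%C by ring. rewrite E. ring. }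
  apply small_zero. intros eta Heta.
  destruct (holC_ccC h z (Hh z ltac:(lra)) (eta / (8 * PI)) ltac:(apply Rdiv_lt_0_compat; lra))
    as [d [Hd Hc]].
  set (e := Rmin (d / 2) ((1 - Cmod z) / 2)).
  assert (He1 : e <= d / 2) by apply Rmin_l.
  assert (He2 : e <= (1 - Cmod z) / 2) by apply Rmin_r.
  assert (He : 0 < e) by (unfold e; apply Rmin_pos; lra).
  assert (Hin : forall t, Cmod (z + RtoC e * cis t)%C < 1).
  { intros t. eapply Rle_lt_trans. apply Cmod_triangle. rewrite Cmod_eps_cis; lra. }
  unfold L. rewrite (circle_deform K z e r); [| lra | lra | lra | lra | lra | auto].
  assert (Hinner : CInt (fun t => K (z + RtoC e * cis t) * (RtoC e * icis t))%C 0 (2 * PI)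
                 = CInt (fun t => Ci * h (z + RtoC e * cis t))%C 0 (2 * PI)).
  { apply CInt_ext. intros t _. unfold K. rewrite icis_eq.
    replace (z + RtoC e * cis t - z)%C with (RtoC e * cis t)%C by ring.
    field. split. apply Hcis. intros E. apply RtoC_inj in E. lra. }
  rewrite Hinner, HR0. rewrite <- CInt_minus.
  2:{ intros t _. apply ccR_mult. apply ccR_const. apply ccR_comp. apply holC_ccC, Hh, Hin. apply ccR_circ. }
  2:{ intros t _. apply ccR_const. }
  apply Rle_lt_trans with (2 * (eta / (8 * PI)) * (2 * PI - 0)).
  apply CInt_bound. lra.
  { intros t _. apply ccR_plus. apply ccR_mult. apply ccR_const. apply ccR_comp. apply holC_ccC, Hh, Hin. apply ccR_circ.
    apply ccR_opp. apply ccR_const. }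
  { intros t _. replace (Ci * h (z + RtoC e * cis t) - Ci * h z)%C with (Ci * (h (z + RtoC e * cis t) - h z))%C by ring.
    rewrite Cmod_mult, Cmod_Ci, Rmult_1_l. left. apply Hc.
    replace (z + RtoC e * cis t - z)%C with (RtoC e * cis t)%C by ring. rewrite Cmod_eps_cis; lra. }
  replace (2 * (eta / (8 * PI)) * (2 * PI - 0)) with (eta / 2) by (field; lra). lra.
Qed.


Lemma bernoulli (x : R) n : 0 <= x -> 1 + INR n * x <= (1 + x) ^ n.
Proof.
  intros Hx. induction n. simpl. lra.
  rewrite S_INR. simpl. assert (0 <= INR n) by apply pos_INR.
  assert (1 <= (1 + x) ^ n) by (apply pow_R1_Rle; lra). nra.
Qed.

Lemma pow_unbounded (q K : R) : 1 < q -> exists n, K < q ^ n.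
Proof.
  intros Hq. destruct (Rle_lt_dec K 0) as [HK|HK].
  { exists O. simpl. lra. }
  destruct (archimed_cor1 ((q - 1) / K)) as [N [HN HN0]]. apply Rdiv_lt_0_compat; lra.
  exists N. pose proof (bernoulli (q - 1) N ltac:(lra)). replace (1 + (q - 1)) with q in H by ring.
  apply lt_0_INR in HN0.
  assert (K < INR N * (q - 1)).
  { apply Rmult_lt_reg_r with (/ INR N). apply Rinv_0_lt_compat; auto.
    replace (INR N * (q - 1) * / INR N) with (q - 1) by (field; lra).
    apply Rmult_lt_reg_r with (/ K). apply Rinv_0_lt_compat; auto.
    replace (q - 1) with ((q - 1) / K * K) by (field; lra).
    replace ((q - 1) / K * K * / K) with ((q - 1) / K) by (field; lra).
    replace (K * / INR N * / K) with (/ INR N) by (field; lra). auto. }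
  lra.
Qed.

Lemma Cpow_ne0 (w : C) m : w <> 0%C -> Cpow w m <> 0%C.
Proof. intros; apply Cpow_nz; auto. Qed.


Lemma schwarz_key (u : C -> C) (z : C) (r : R) (n : nat) :
  (forall w, Cmod w < 1 -> holC u w) ->
  (forall w, Cmod w < 1 -> Cmod (u w) < 1) ->
  u 0%C = 0%C -> 0 < Cmod z -> Cmod z < r -> r < 1 ->
  2 * PI * Cmod (u z) ^ n <= Cmod z ^ n * (2 * (r / (r ^ n * (r - Cmod z))) * (2 * PI)).
Proof.
  intros Hu Hu1 Hu0 Hz Hzr Hr1.
  assert (HPI : 0 < PI) by apply PI_RGT_0.
  assert (Hr : 0 < r) by lra.
  set (W := fun t => (RtoC r * cis t)%C).
  set (dW := fun t => (RtoC r * icis t)%C).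
  assert (HW : forall t, Cmod (W t) = r) by (intros; unfold W; apply Cmod_eps_cis; lra).
  assert (HW0 : forall t, W t <> 0%C).
  { intros t E. pose proof (HW t). rewrite E, Cmod_0 in H. lra. }
  assert (HWz : forall t, r - Cmod z <= Cmod (W t - z)).
  { intros t. rewrite <- (HW t). apply Cmod_minus_ge. }
  assert (HWz' : forall t, W t <> z).
  { intros t E. specialize (HWz t). rewrite E in HWz. unfold Cminus in HWz. rewrite Cplus_opp_r, Cmod_0 in HWz. lra. }
  assert (Hz0 : z <> 0%C). { intros E. rewrite E, Cmod_0 in Hz. lra. }
  set (Im := fun m => CInt (fun t => (Cpow (u (W t)) n / (Cpow (W t) m * (W t - z))) * dW t)%C 0 (2 * PI)).
  set (Jk := fun k => CInt (fun t => (Cpow (u (W t)) n / Cpow (W t) k) * dW t)%C 0 (2 * PI)).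
  assert (okI : forall m, cint_ok (fun t => (Cpow (u (W t)) n / (Cpow (W t) m * (W t - z))) * dW t)%C 0 (2 * PI)).
  { intros m. apply (cint_ok_circ0 (fun w => Cpow (u w) n / (Cpow w m * (w - z)))%C).
    intros t. fold (W t). apply holC_div. apply holC_pow. apply Hu. rewrite HW; lra.
    apply holC_mult. apply holC_pow. apply holC_id. apply holC_minus. apply holC_id. apply holC_const.
    apply Cmult_neq_0. apply Cpow_ne0; auto. intros E. apply (HWz' t).
    replace (W t) with ((W t - z) + z)%C by ring. rewrite E. ring. }
  assert (okJ : forall k, cint_ok (fun t => (Cpow (u (W t)) n / Cpow (W t) k) * dW t)%C 0 (2 * PI)).
  { intros k. apply (cint_ok_circ0 (fun w => Cpow (u w) n / Cpow w k)%C).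
    intros t. fold (W t). apply holC_div. apply holC_pow. apply Hu. rewrite HW; lra.
    apply holC_pow. apply holC_id. apply Cpow_ne0; auto. }
  assert (HJ : forall k, (k <= n)%nat -> Jk k = 0%C).
  { intros k Hk. unfold Jk, W, dW.
    apply (circle_zero (fun w => Cpow (u w) n / Cpow w k)%C r Hr Hr1).
    - intros w Hw Hw0. apply holC_div. apply holC_pow. apply Hu; auto.
      apply holC_pow. apply holC_id. apply Cpow_ne0; auto.
    - destruct (Hu 0%C ltac:(rewrite Cmod_0; lra)) as [b Hb].
      destruct (Hb 1 ltac:(lra)) as [d [Hd Hb']].
      exists ((Cmod b + 1) ^ n), (Rmin d 1). split. apply Rmin_pos; lra.
      intros w [Hw1 Hw2]. pose proof (Rmin_l d 1). pose proof (Rmin_r d 1).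
      assert (Huw : Cmod (u w) <= (Cmod b + 1) * Cmod w).
      { specialize (Hb' w). rewrite Hu0 in Hb'.
        replace (w - 0)%C with w in Hb' by ring.
        assert (Cmod (u w - 0 - w * b)%C <= 1 * Cmod w) by (apply Hb'; lra).
        replace (u w) with ((u w - 0 - w * b) + w * b)%C by ring.
        eapply Rle_trans. apply Cmod_triangle. rewrite Cmod_mult. nra. }
      assert (Hw0 : w <> 0%C). { intros E. rewrite E, Cmod_0 in Hw1. lra. }
      rewrite Cmod_div by (apply Cpow_ne0; auto). rewrite !Cmod_pow.
      replace n with ((n - k) + k)%nat by lia.
      assert (0 < Cmod w ^ k) by (apply pow_lt; lra).
      apply Rmult_le_reg_r with (Cmod w ^ k); auto.
      replace (Cmod (u w) ^ (n - k + k) / Cmod w ^ k * Cmod w ^ k) with (Cmod (u w) ^ (n - k + k)) by (field; lra).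
      rewrite !pow_add.
      assert (HA1 : Cmod (u w) ^ (n - k) <= (Cmod b + 1) ^ (n - k)).
      { apply pow_incr. split. apply Cmod_ge_0. apply Rle_trans with ((Cmod b + 1) * Cmod w). auto.
        pose proof (Cmod_ge_0 b). nra. }
      assert (HA2 : Cmod (u w) ^ k <= ((Cmod b + 1) * Cmod w) ^ k).
      { apply pow_incr. split. apply Cmod_ge_0. auto. }
      rewrite Rpow_mult_distr in HA2.
      assert (0 <= Cmod (u w) ^ (n - k)) by (apply pow_le; apply Cmod_ge_0).
      assert (0 <= Cmod (u w) ^ k) by (apply pow_le; apply Cmod_ge_0).
      assert (0 <= (Cmod b + 1) ^ k) by (apply pow_le; pose proof (Cmod_ge_0 b); lra).
      assert (0 <= (Cmod b + 1) ^ (n - k)) by (apply pow_le; pose proof (Cmod_ge_0 b); lra).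
      apply Rle_trans with ((Cmod b + 1) ^ (n - k) * ((Cmod b + 1) ^ k * Cmod w ^ k)).
      apply Rmult_le_compat; auto. right; ring. }
  assert (Step : forall m, (S m <= n)%nat -> (z * Im (S m))%C = Im m).
  { intros m Hm. unfold Im. rewrite <- CInt_scal by apply okI.
    transitivity (CInt (fun t => (Cpow (u (W t)) n / (Cpow (W t) m * (W t - z))) * dW t -
                                 (Cpow (u (W t)) n / Cpow (W t) (S m)) * dW t)%C 0 (2 * PI)).
    - apply CInt_ext. intros t _. simpl Cpow. field. split; [|split]; auto.
      apply Cpow_ne0; auto. intros E. apply (HWz' t).
      replace (W t) with ((W t - z) + z)%C by ring. rewrite E. ring.
    - rewrite CInt_minus by (apply okI || apply okJ). fold (Jk (S m)). rewrite HJ by lia. ring. }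
  assert (Hall : forall m, (m <= n)%nat -> (Cpow z m * Im m)%C = Im O).
  { induction m; intros Hm. simpl. ring.
    simpl Cpow. rewrite <- IHm by lia. rewrite <- (Step m) by lia. ring. }
  assert (HI0 : Im O = (RtoC (2 * PI) * (Ci * Cpow (u z) n))%C).
  { unfold Im. rewrite <- (cauchy_formula (fun w => Cpow (u w) n) z r Hzr Hr1).
    - apply CInt_ext. intros t _. simpl Cpow. unfold W. rewrite Cmult_1_l. auto.
    - intros w Hw. apply holC_pow. apply Hu; auto. }
  specialize (Hall n (Nat.le_refl n)). rewrite HI0 in Hall.
  apply (f_equal Cmod) in Hall.
  rewrite !Cmod_mult, Cmod_Ci, !Cmod_pow, Cmod_R, Rabs_pos_eq in Hall by lra.
  rewrite Rmult_1_l in Hall. rewrite <- Hall.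
  apply Rmult_le_compat_l. apply pow_le; lra.
  apply Rle_trans with (2 * (r / (r ^ n * (r - Cmod z))) * (2 * PI - 0)); [|right; ring].
  apply CInt_bound. lra. apply okI.
  intros t _. unfold dW. rewrite Cmod_mult, Cmod_eps_icis by lra.
  rewrite Cmod_div. 2:{ apply Cmult_neq_0. apply Cpow_ne0; auto. intros E. apply (HWz' t).
      replace (W t) with ((W t - z) + z)%C by ring. rewrite E. ring. }
  rewrite Cmod_mult, !Cmod_pow, HW.
  assert (0 < r ^ n) by (apply pow_lt; lra).
  assert (Hu' : Cmod (u (W t)) ^ n <= 1).
  { rewrite <- (pow1 n). apply pow_incr. split. apply Cmod_ge_0. left. apply Hu1. rewrite HW; lra. }
  specialize (HWz t). 
  assert (HA : 0 < r - Cmod z) by lra.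
  unfold Rdiv. rewrite (Rmult_comm r (/ (r ^ n * (r - Cmod z)))).
  apply Rmult_le_compat_r. lra.
  apply Rle_trans with (1 * / (r ^ n * Cmod (W t - z))).
  apply Rmult_le_compat_r. left. apply Rinv_0_lt_compat. apply Rmult_lt_0_compat; lra. auto.
  rewrite Rmult_1_l. apply Rinv_le_contravar. apply Rmult_lt_0_compat; lra.
  apply Rmult_le_compat_l; lra.
Qed.

Lemma schwarz (u : C -> C) :
  (forall w, Cmod w < 1 -> holC u w) ->
  (forall w, Cmod w < 1 -> Cmod (u w) < 1) ->
  u 0%C = 0%C ->
  forall z, Cmod z < 1 -> Cmod (u z) <= Cmod z.
Proof.
  intros Hu Hu1 Hu0 z Hz.
  destruct (Req_dec (Cmod z) 0) as [Z|NZ].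
  { apply Cmod_eq_0 in Z. subst. rewrite Hu0, Cmod_0. lra. }
  pose proof (Cmod_ge_0 z) as Hz0.
  apply Rnot_lt_le. intros Hlt.
  assert (Hzp : 0 < Cmod z) by lra.
  set (q := Cmod (u z) / Cmod z).
  assert (Hq : 1 < q).
  { unfold q. apply Rmult_lt_reg_r with (Cmod z); auto.
    replace (Cmod (u z) / Cmod z * Cmod z) with (Cmod (u z)) by (field; lra). lra. }
  assert (Hiq : / q < 1). { rewrite <- Rinv_1. apply Rinv_lt_contravar; lra. }
  set (r := (1 + Rmax (Cmod z) (/ q)) / 2).
  pose proof (Rmax_l (Cmod z) (/ q)). pose proof (Rmax_r (Cmod z) (/ q)).
  assert (Hmx : Rmax (Cmod z) (/ q) < 1) by (apply Rmax_lub_lt; lra).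
  assert (Hzr : Cmod z < r) by (unfold r; lra).
  assert (Hr1 : r < 1) by (unfold r; lra).
  assert (Hrq : 1 < r * q).
  { assert (/ q < r) by (unfold r; lra).
    apply Rmult_lt_reg_r with (/ q). apply Rinv_0_lt_compat; lra.
    replace (r * q * / q) with r by (field; lra). lra. }
  assert (Hr : 0 < r) by lra.
  destruct (pow_unbounded (r * q) (2 * r / (r - Cmod z)) Hrq) as [n Hn].
  pose proof (schwarz_key u z r n Hu Hu1 Hu0 Hzp Hzr Hr1) as K.
  assert (HPI : 0 < PI) by apply PI_RGT_0.
  assert (Hrn : 0 < r ^ n) by (apply pow_lt; lra).
  assert (Hzn : 0 < Cmod z ^ n) by (apply pow_lt; lra).
  assert (HA : Cmod (u z) ^ n <= Cmod z ^ n * (2 * r / (r ^ n * (r - Cmod z)))).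
  { apply Rmult_le_reg_l with (2 * PI). lra.
    eapply Rle_trans. apply K. right. field. split; lra. }
  assert (E : (r * q) ^ n = r ^ n * Cmod (u z) ^ n / Cmod z ^ n).
  { unfold q, Rdiv. rewrite !Rpow_mult_distr, pow_inv. ring. }
  rewrite E in Hn.
  assert (r ^ n * Cmod (u z) ^ n / Cmod z ^ n <= 2 * r / (r - Cmod z)).
  { apply Rle_trans with (r ^ n * (Cmod z ^ n * (2 * r / (r ^ n * (r - Cmod z)))) / Cmod z ^ n).
    unfold Rdiv. apply Rmult_le_compat_r. left; apply Rinv_0_lt_compat; lra.
    apply Rmult_le_compat_l; lra.
    right. field. split; lra. }
  lra.
Qed.

Lemma Cmod2 (v : C) : Cmod v ^ 2 = fst v * fst v + snd v * snd v.
Proof. rewrite Cmod2_alt. unfold Re, Im. ring. Qed.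

Lemma Cmod_lt1_ne1 (v : C) : Cmod v < 1 -> (1 - v)%C <> 0%C.
Proof.
  intros Hv E. assert (v = 1%C). { replace v with (1 - (1 - v))%C by ring. rewrite E. ring. }
  subst. rewrite Cmod_1 in Hv. lra.
Qed.

Lemma ell_parts (v : C) : (1 - v)%C <> 0%C ->
  Re (ell v) = (1 - Cmod v ^ 2) / Cmod (1 - v) ^ 2 /\ Im (ell v) = 2 * Im v / Cmod (1 - v) ^ 2.
Proof.
  intros Hv. rewrite !Cmod2. destruct v as [a b]. unfold ell, Re, Im.
  assert (HD : (1 - a) * (1 - a) + b * b <> 0).
  { intros E. apply Hv. pose proof (Rle_0_sqr (1 - a)). pose proof (Rle_0_sqr b). unfold Rsqr in *. assert (E1 : (1 - a) * (1 - a) = 0) by lra. assert (E2 : b * b = 0) by lra.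
    apply Rmult_integral in E1. apply Rmult_integral in E2.
    apply injective_projections; simpl; destruct E1, E2; lra. }
  unfold Cdiv, Cinv, Cmult, Cplus, Cminus, Copp; simpl.
  split; field; replace ((1 + - a) * (1 + - a) + - b * - b) with ((1 - a) * (1 - a) + b * b) by ring; auto.
Qed.

Lemma Re_mul (F z : C) : Re (F * z)%C = Re F * Re z - Im F * Im z.
Proof. destruct F, z. unfold Re, Im. simpl. ring. Qed.

Lemma Cmod_1m_pos (v : C) : Cmod v < 1 -> 0 < Cmod (1 - v) ^ 2.
Proof. intros Hv. apply pow_lt. apply Cmod_gt_0. apply Cmod_lt1_ne1; auto. Qed.

Lemma Re_F_ell (F v : C) : Cmod v < 1 ->
  Re (F * ell v)%C = (Re F * (1 - Cmod v ^ 2) - 2 * Im F * Im v) / Cmod (1 - v) ^ 2.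
Proof.
  intros Hv. pose proof (Cmod_1m_pos v Hv). destruct (ell_parts v (Cmod_lt1_ne1 v Hv)) as [E1 E2].
  assert (0 < Cmod (1 - v)) by (apply Cmod_gt_0, Cmod_lt1_ne1; auto). rewrite Re_mul, E1, E2. field. lra.
Qed.

Lemma ell_Re_pos (v : C) : Cmod v < 1 -> 0 < Re (ell v).
Proof.
  intros Hv. pose proof (Cmod_1m_pos v Hv). destruct (ell_parts v (Cmod_lt1_ne1 v Hv)) as [E1 _].
  rewrite E1. apply Rdiv_lt_0_compat; auto. pose proof (Cmod_ge_0 v).
  assert (Cmod v ^ 2 < 1) by (replace (Cmod v ^ 2) with (Cmod v * Cmod v) by ring; nra). lra.
Qed.

Lemma holC_ell (v : C) : Cmod v < 1 -> holC ell v.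
Proof.
  intros Hv. unfold ell. apply holC_div. apply holC_plus. apply holC_const. apply holC_id.
  apply holC_minus. apply holC_const. apply holC_id. apply Cmod_lt1_ne1; auto.
Qed.

Lemma Cmod_lt_sq (a b : C) : Cmod a ^ 2 < Cmod b ^ 2 -> Cmod a < Cmod b.
Proof.
  intros H. pose proof (Cmod_ge_0 a). pose proof (Cmod_ge_0 b).
  destruct (Rlt_le_dec (Cmod a) (Cmod b)); auto.
  assert (Cmod b ^ 2 <= Cmod a ^ 2) by (replace (Cmod b ^ 2) with (Cmod b * Cmod b) by ring; replace (Cmod a ^ 2) with (Cmod a * Cmod a) by ring; nra). lra.
Qed.


Definition uof (f : C -> C) (w : C) : C := ((f w - 1) / (f w + 1))%C.

Lemma fp1_ne0 (f : C -> C) w : 0 < Re (f w) -> (f w + 1)%C <> 0%C.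
Proof.
  intros H E. apply (f_equal Re) in E. unfold Re in *. simpl in E. lra.
Qed.

Lemma uof_props (f : C -> C) : classP f ->
  (forall w, inD w -> holC (uof f) w) /\
  (forall w, inD w -> Cmod (uof f w) < 1) /\
  uof f 0%C = 0%C /\
  (forall w, inD w -> f w = ell (uof f w)).
Proof.
  intros [Han [Hre H0]]. split; [|split; [|split]].
  - intros w Hw. unfold uof. apply holC_div.
    apply holC_minus. apply holC_ex_derive, Han; auto. apply holC_const.
    apply holC_plus. apply holC_ex_derive, Han; auto. apply holC_const.
    apply fp1_ne0; auto.
  - intros w Hw. unfold uof. specialize (Hre w Hw). pose proof (fp1_ne0 f w Hre).
    rewrite Cmod_div by auto. apply Rmult_lt_reg_r with (Cmod (f w + 1)). apply Cmod_gt_0; auto.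
    unfold Rdiv. rewrite Rmult_assoc, Rinv_l, Rmult_1_r, Rmult_1_l. 2:{ apply Rgt_not_eq, Cmod_gt_0; auto. }
    apply Cmod_lt_sq. rewrite !Cmod2. destruct (f w) as [p q]. unfold Re in Hre. simpl in *. nra.
  - unfold uof. rewrite H0. unfold Cdiv. replace (1 - 1)%C with (RtoC 0) by ring. ring.
  - intros w Hw. specialize (Hre w Hw). pose proof (fp1_ne0 f w Hre). unfold ell, uof.
    field. split; auto.
    replace (f w + 1 - (f w - 1))%C with (RtoC 2) by ring. intros E. apply RtoC_inj in E. lra.
Qed.

Lemma trig_id (t : R) : 0 <= t < 1 ->
  PI / 2 - asin (2 * t / (1 + t ^ 2)) = PI / 2 - atan (2 * t / (1 - t ^ 2)) /\
  PI / 2 - atan (2 * t / (1 - t ^ 2)) = atan_ratio t.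
Proof.
  intros Ht. assert (H1 : 0 < 1 + t ^ 2) by (simpl; nra).
  assert (H2 : 0 < 1 - t ^ 2) by (simpl; nra).
  split.
  - f_equal. rewrite asin_atan.
    + f_equal.
      assert (E : 1 - (2 * t / (1 + t ^ 2))² = ((1 - t ^ 2) / (1 + t ^ 2))²).
      { unfold Rsqr. field. lra. }
      rewrite E, sqrt_Rsqr. field. split; lra.
      apply Rdiv_le_0_compat; lra.
    + split.
      * assert (0 <= 2 * t / (1 + t ^ 2)) by (apply Rdiv_le_0_compat; lra). lra.
      * apply Rmult_lt_reg_r with (1 + t ^ 2); auto.
        replace (2 * t / (1 + t ^ 2) * (1 + t ^ 2)) with (2 * t) by (field; lra).
        assert (0 < (1 - t) * (1 - t)) by (apply Rmult_lt_0_compat; lra). simpl. nra.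
  - unfold atan_ratio. destruct (Req_EM_T t 0) as [->|Hn].
    + replace (2 * 0 / (1 - 0 ^ 2)) with 0 by (simpl; field). rewrite atan_0. ring.
    + replace ((1 - t ^ 2) / (2 * t)) with (/ (2 * t / (1 - t ^ 2))) by (field; lra).
      rewrite atan_inv. ring. apply Rdiv_lt_0_compat; lra.
Qed.

Lemma c2_num (F : C) (t : R) : 0 < Re F -> 0 <= t ->
  (2 * t * Rabs (Im F / Re F) < 1 - t ^ 2 <-> 2 * t * Rabs (Im F) < Re F * (1 - t ^ 2)).
Proof.
  intros Hx Ht. rewrite Rabs_div by lra. rewrite (Rabs_pos_eq (Re F)) by lra.
  split; intros H.
  - apply Rmult_lt_reg_r with (/ Re F). apply Rinv_0_lt_compat; auto.
    replace (Re F * (1 - t ^ 2) * / Re F) with (1 - t ^ 2) by (field; lra).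
    replace (2 * t * Rabs (Im F) * / Re F) with (2 * t * (Rabs (Im F) / Re F)) by (field; lra). auto.
  - apply Rmult_lt_reg_r with (Re F); auto.
    replace (2 * t * (Rabs (Im F) / Re F) * Re F) with (2 * t * Rabs (Im F)) by (field; lra). lra.
Qed.

Lemma Rabs_atan q : Rabs (atan q) = atan (Rabs q).
Proof.
  destruct (Rle_dec 0 q).
  - rewrite (Rabs_pos_eq q) by auto. apply Rabs_pos_eq.
    destruct (Req_dec q 0). subst; rewrite atan_0; lra. left. rewrite <- atan_0. apply atan_increasing. lra.
  - rewrite (Rabs_left q) by lra. rewrite atan_opp. apply Rabs_left.
    rewrite <- atan_0. apply atan_increasing. lra.
Qed.

Lemma d_iff (F : C) (t : R) : 0 < Re F -> 0 <= t < 1 ->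
  (Rabs (Carg F) < PI / 2 - asin (2 * t / (1 + t ^ 2)) <->
   2 * t * Rabs (Im F / Re F) < 1 - t ^ 2).
Proof.
  intros Hx Ht. destruct (trig_id t Ht) as [E1 E2]. rewrite E1, E2.
  assert (HC : Carg F = atan (Im F / Re F)).
  { unfold Carg, Re, Im in *. destruct (Rlt_dec 0 (fst F)); [auto|lra]. }
  rewrite HC, Rabs_atan. unfold atan_ratio. destruct (Req_EM_T t 0) as [->|Hn].
  - split; intros _. lra. pose proof (atan_bound (Rabs (Im F / Re F))). lra.
  - assert (Hp : 0 < t) by lra. assert (H2 : 0 < 1 - t ^ 2) by (simpl; nra).
    split; intros H.
    + destruct (Rlt_le_dec (Rabs (Im F / Re F)) ((1 - t ^ 2) / (2 * t))) as [L|L].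
      * apply Rmult_lt_reg_r with (/ (2 * t)). apply Rinv_0_lt_compat; lra.
        replace (2 * t * Rabs (Im F / Re F) * / (2 * t)) with (Rabs (Im F / Re F)) by (field; lra).
        replace ((1 - t ^ 2) * / (2 * t)) with ((1 - t ^ 2) / (2 * t)) by (field; lra). auto.
      * exfalso. destruct (Req_dec (Rabs (Im F / Re F)) ((1 - t ^ 2) / (2 * t))) as [Eq|Ne].
        rewrite Eq in H. lra.
        assert (atan ((1 - t ^ 2) / (2 * t)) < atan (Rabs (Im F / Re F))) by (apply atan_increasing; lra). lra.
    + apply atan_increasing. apply Rmult_lt_reg_r with (2 * t). lra.
      replace ((1 - t ^ 2) / (2 * t) * (2 * t)) with (1 - t ^ 2) by (field; lra). lra.
Qed.

Lemma c1_iff (w : C) (t : R) : Cmod w < 1 -> 0 <= t ->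
  (4 * t * Rabs (Im w) < (1 - Cmod w ^ 2) * (1 - t ^ 2) <->
   2 * t * Rabs (Im (ell w) / Re (ell w)) < 1 - t ^ 2).
Proof.
  intros Hw Ht. pose proof (Cmod_1m_pos w Hw) as HD.
  destruct (ell_parts w (Cmod_lt1_ne1 w Hw)) as [E1 E2].
  assert (Hw2 : 0 < 1 - Cmod w ^ 2).
  { pose proof (Cmod_ge_0 w). replace (Cmod w ^ 2) with (Cmod w * Cmod w) by ring. nra. }
  assert (E : Im (ell w) / Re (ell w) = 2 * Im w / (1 - Cmod w ^ 2)).
  { assert (0 < Cmod (1 - w)) by (apply Cmod_gt_0, Cmod_lt1_ne1; auto). rewrite E1, E2. field. repeat split; lra. }
  rewrite E, Rabs_div by lra. rewrite (Rabs_pos_eq (1 - Cmod w ^ 2)) by lra.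
  rewrite Rabs_mult, (Rabs_pos_eq 2) by lra.
  split; intros H.
  - apply Rmult_lt_reg_r with (1 - Cmod w ^ 2); auto.
    replace (2 * t * (2 * Rabs (Im w) / (1 - Cmod w ^ 2)) * (1 - Cmod w ^ 2)) with (4 * t * Rabs (Im w)) by (field; lra).
    lra.
  - replace (4 * t * Rabs (Im w)) with (2 * t * (2 * Rabs (Im w) / (1 - Cmod w ^ 2)) * (1 - Cmod w ^ 2)) by (field; lra).
    rewrite (Rmult_comm (1 - Cmod w ^ 2)). apply Rmult_lt_compat_r; auto.
Qed.

Lemma pos_of_c2 (F v : C) (t : R) : 0 < Re F -> Cmod v <= t -> t < 1 ->
  2 * t * Rabs (Im F) < Re F * (1 - t ^ 2) -> 0 < Re (F * ell v)%C.
Proof.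
  intros Hx Hv Ht H. assert (Hv1 : Cmod v < 1) by lra.
  rewrite Re_F_ell by auto. apply Rdiv_lt_0_compat. 2:{ apply Cmod_1m_pos; auto. }
  pose proof (Cmod_ge_0 v) as Hv0. pose proof (snd_le_Cmod v) as Hiv.
  assert (Im F * Im v <= Rabs (Im F) * Cmod v).
  { apply Rle_trans with (Rabs (Im F * Im v)). apply Rle_abs. rewrite Rabs_mult.
    apply Rmult_le_compat_l. apply Rabs_pos. unfold Im; auto. }
  pose proof (Rabs_pos (Im F)).
  assert (Re F * (1 - t ^ 2) - 2 * t * Rabs (Im F) <= Re F * (1 - Cmod v ^ 2) - 2 * Rabs (Im F) * Cmod v).
  { replace (t ^ 2) with (t * t) by ring. replace (Cmod v ^ 2) with (Cmod v * Cmod v) by ring.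
    assert (0 <= Re F * ((t - Cmod v) * (t + Cmod v))) by (apply Rmult_le_pos; [lra|apply Rmult_le_pos; lra]).
    assert (0 <= Rabs (Im F) * (t - Cmod v)) by (apply Rmult_le_pos; lra). nra. }
  lra.
Qed.

Lemma c2_of_b (F w : C) : 0 < Re F -> Cmod w < 1 ->
  (forall lam : C, Cmod lam = 1 -> 0 < Re (F * ell (lam * w))%C) ->
  2 * Cmod w * Rabs (Im F) < Re F * (1 - Cmod w ^ 2).
Proof.
  intros Hx Hw Hb. set (t := Cmod w) in *.
  pose proof (Cmod_ge_0 w) as Ht0. fold t in Ht0.
  destruct (Req_dec t 0) as [Z|NZ].
  { rewrite Z. simpl. nra. }
  assert (Hwn : w <> 0%C). { intros E. apply NZ. unfold t. rewrite E. apply Cmod_0. }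
  set (sg := if Rle_dec 0 (Im F) then 1 else -1).
  assert (Hsg : Rabs sg = 1 /\ sg * Im F = Rabs (Im F)).
  { unfold sg. destruct (Rle_dec 0 (Im F)).
    - rewrite Rabs_R1, Rabs_pos_eq by auto. split; ring.
    - rewrite (Rabs_left (-1)) by lra. rewrite (Rabs_left (Im F)) by lra. split; ring. }
  set (lam := (RtoC (sg * t) * Ci / w)%C).
  assert (Hlam : Cmod lam = 1).
  { unfold lam. rewrite Cmod_div by auto. rewrite Cmod_mult, Cmod_Ci, Cmod_R, Rabs_mult.
    rewrite (proj1 Hsg), (Rabs_pos_eq t) by lra. fold t. field. lra. }
  specialize (Hb lam Hlam).
  assert (Ev : (lam * w)%C = (RtoC (sg * t) * Ci)%C) by (unfold lam; field; auto).
  rewrite Ev in Hb.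
  assert (Hv : Cmod (RtoC (sg * t) * Ci)%C = t).
  { rewrite Cmod_mult, Cmod_Ci, Cmod_R, Rabs_mult, (proj1 Hsg), (Rabs_pos_eq t) by lra. ring. }
  rewrite Re_F_ell in Hb by (rewrite Hv; lra). rewrite Hv in Hb.
  assert (Im (RtoC (sg * t) * Ci)%C = sg * t) by (unfold Im, Ci; simpl; ring).
  rewrite H in Hb.
  pose proof (Cmod_1m_pos (RtoC (sg * t) * Ci)%C ltac:(rewrite Hv; lra)) as HD.
  assert (0 < Re F * (1 - t ^ 2) - 2 * Im F * (sg * t)).
  { apply Rmult_lt_reg_r with (/ Cmod (1 - RtoC (sg * t) * Ci) ^ 2). apply Rinv_0_lt_compat; auto.
    rewrite Rmult_0_l. auto. }
  replace (2 * Im F * (sg * t)) with (2 * t * (sg * Im F)) in H0 by ring.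
  rewrite (proj2 Hsg) in H0. lra.
Qed.

Lemma C1_neq_0 : RtoC 1 <> RtoC 0.
Proof. intros E. apply RtoC_inj in E. lra. Qed.

Lemma ell0 : ell 0%C = 1%C.
Proof.
  unfold ell. replace (1 - 0)%C with (RtoC 1) by ring. field.
Qed.

Theorem theorem2p2 (phi F omega : C -> C)
  (Hphi : schwarz_type phi) (HF : classP F)
  (Homega : schwarz_type omega) (HFw : forall z, inD z -> F z = ell (omega z)) :
  let a := forall f, classP f -> classP (T_op F phi f) in
  let b := forall lam : C, Cmod lam = 1 -> classP (T_op F phi (ell_lam lam)) in
  let c1 := forall z, inD z ->
      4 * Cmod (phi z) * Rabs (Im (omega z))
      < (1 - Cmod (omega z) ^ 2) * (1 - Cmod (phi z) ^ 2) in
  let c2 := forall z, inD z ->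
      2 * Cmod (phi z) * Rabs (Im (F z) / Re (F z)) < 1 - Cmod (phi z) ^ 2 in
  let d := forall z, inD z ->
      Rabs (Carg (F z)) < PI / 2 - asin (2 * Cmod (phi z) / (1 + Cmod (phi z) ^ 2)) in
  ((a <-> b) /\ (a <-> c1) /\ (a <-> c2) /\ (a <-> d)) /\
  (forall z, inD z ->
     PI / 2 - asin (2 * Cmod (phi z) / (1 + Cmod (phi z) ^ 2))
     = PI / 2 - atan (2 * Cmod (phi z) / (1 - Cmod (phi z) ^ 2)) /\
     PI / 2 - atan (2 * Cmod (phi z) / (1 - Cmod (phi z) ^ 2))
     = atan_ratio (Cmod (phi z))).
Proof.
  intros a b c1 c2 d.
  destruct HF as [HFan [HFre HF0]].
  destruct Hphi as [Hphian [HphiD Hphi0]].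
  destruct Homega as [Homan [HomD Hom0]].
  assert (Hpt : forall z, inD z -> 0 <= Cmod (phi z) < 1).
  { intros z Hz. split. apply Cmod_ge_0. apply HphiD; auto. }
  assert (AB : a -> b).
  { intros Ha lam Hlam. apply Ha. split; [|split].
    - intros z Hz. apply holC_ex_derive.
      apply (holC_comp ell (fun w => lam * w)%C z).
      + apply holC_ell. rewrite Cmod_mult, Hlam, Rmult_1_l. apply Hz.
      + apply holC_mult. apply holC_const. apply holC_id.
    - intros z Hz. change (ell_lam lam z) with (ell (lam * z)%C). apply ell_Re_pos.
      rewrite Cmod_mult, Hlam, Rmult_1_l. apply Hz.
    - change (ell_lam lam 0%C) with (ell (lam * 0)%C). replace (lam * 0)%C with (RtoC 0) by ring.
      apply ell0. }
  assert (BC2 : b -> c2).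
  { intros Hb z Hz. apply (c2_num (F z) _ (HFre z Hz) (Cmod_ge_0 _)).
    apply c2_of_b. apply HFre; auto. apply HphiD; auto.
    intros lam Hlam. destruct (Hb lam Hlam) as [_ [Hre _]]. exact (Hre z Hz). }
  assert (C2A : c2 -> a).
  { intros Hc f Hf. destruct (uof_props f Hf) as [Hu [Hu1 [Hu0 Hfe]]].
    split; [|split].
    - intros z Hz. apply holC_ex_derive. unfold T_op. apply holC_mult.
      apply holC_ex_derive, HFan; auto.
      apply (holC_comp f phi z). apply holC_ex_derive. apply (proj1 Hf). apply HphiD; auto.
      apply holC_ex_derive, Hphian; auto.
    - intros z Hz. unfold T_op. rewrite (Hfe (phi z) (HphiD z Hz)).
      apply pos_of_c2 with (Cmod (phi z)).
      + apply HFre; auto.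
      + apply schwarz; auto. apply HphiD; auto.
      + apply HphiD; auto.
      + apply (c2_num (F z) _ (HFre z Hz) (Cmod_ge_0 _)). apply Hc; auto.
    - unfold T_op. rewrite Hphi0, HF0, (proj2 (proj2 Hf)). ring. }
  assert (C12 : c1 <-> c2).
  { split; intros H z Hz; specialize (H z Hz); rewrite (HFw z Hz) in *;
    apply (c1_iff (omega z) (Cmod (phi z)) (HomD z Hz) (Cmod_ge_0 _)); auto. }
  assert (C2D : c2 <-> d).
  { split; intros H z Hz; specialize (H z Hz);
    apply (d_iff (F z) (Cmod (phi z)) (HFre z Hz) (Hpt z Hz)); auto. }
  split.
  - split; [|split; [|split]].
    + split; auto.
    + split. intros Ha. apply C12. apply BC2. apply AB. auto. intros H. apply C2A. apply C12. auto.
    + split. intros Ha. apply BC2. apply AB. auto. auto.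
    + split. intros Ha. apply C2D. apply BC2. apply AB. auto. intros H. apply C2A. apply C2D. auto.
  - intros z Hz. apply trig_id. apply Hpt. auto.
Qed.
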